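(* Let $$E=\begin{bmatrix} J_{k,a} & -J_{k,b} & J_{k,c} & -J_{k,d} & 0 & 0 \\ -J_{l,a} & J_{l,b} & -J_{l,c} & J_{l,d} & 0 & 0 \\ J_{p,a} & -J_{p,b} & 0 & 0 & J_{p,e} & -J_{p,f} \\ -J_{q,a} & J_{q,b} & 0 & 0 & -J_{q,e} & J_{q,f} \\ 0 & 0 & J_{r,c} & -J_{r,d} & -J_{r,e} & J_{r,f} \\ 0 & 0 & -J_{s,c} & J_{s,d} & J_{s,e} & -J_{s,f} \\ \end{bmatrix}$$ where $E\mathbf{1}=0$, $\mathbf{1}^TE=0^T$, and $a+b$, $c+d$, $e+f$, $k+l$, $p+q$ and $r+s$ are positive. Let \begin{align*} A=\begin{bmatrix} 0 & J_{k,b} & 0 & J_{k,d} & X_{11} & X_{12} \\ J_{l,a} & 0 & J_{l,c} & 0 & X_{21} & X_{22} \\ 0 & J_{p,b} & Y_{11} & Y_{12} & 0 & J_{p,f} \\ J_{q,a} & 0 & Y_{21} & Y_{22} & J_{q,e} & 0 \\ Z_{11} & Z_{12} & 0 & J_{r,d} & J_{r,e} & 0 \\ Z_{21} & Z_{22} & J_{s,c} & 0 & 0 & J_{s,f} \\ \end{bmatrix} \end{align*} be a $(0,1)$ matrix conformally partitioned with $E$. Suppose that $X=\begin{bmatrix} X_{11} & X_{12}\\ X_{21} & X_{22} \end{bmatrix}$, $Y=\begin{bmatrix} Y_{11} & Y_{12}\\ Y_{21} & Y_{22} \end{bmatrix}$ and $Z=\begin{bmatrix} Z_{11} & Z_{12}\\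 Z_{21} & Z_{22} \end{bmatrix}$. Then, $A$ and $A+E$ are Gram mates if and only if $X$, $Y$ and $Z$ satisfy the following conditions: \begin{enumerate} \item there are integers $x_1,x_2,y_1,y_2,z_1$ and $z_2$ such that $X\begin{bmatrix} \mathbf{1}\\ -\mathbf{1} \end{bmatrix}=\begin{bmatrix} x_1\mathbf{1}\\ x_2\mathbf{1} \end{bmatrix}$, $Y\begin{bmatrix} \mathbf{1}\\ -\mathbf{1} \end{bmatrix}=\begin{bmatrix} y_1\mathbf{1}\\ y_2\mathbf{1} \end{bmatrix}$, $Z\begin{bmatrix} \mathbf{1}\\ -\mathbf{1} \end{bmatrix}=\begin{bmatrix} z_1\mathbf{1}\\ z_2\mathbf{1} \end{bmatrix}$ and $x_1=y_2=-z_2$, $x_2=y_1=-z_1$, $x_1+x_2=y_1+y_2=-(z_1+z_2)=e-f$; and \item there are integers $\alpha_1,\alpha_2,\beta_1,\beta_2,\gamma_1$ and $\gamma_2$ such that $X^T\begin{bmatrix} \mathbf{1}\\ -\mathbf{1} \end{bmatrix}=\begin{bmatrix} \alpha_1\mathbf{1}\\ \alpha_2\mathbf{1} \end{bmatrix}$, $Y^T\begin{bmatrix} \mathbf{1}\\ -\mathbf{1} \end{bmatrix}=\begin{bmatrix} \beta_1\mathbf{1}\\ \beta_2\mathbf{1} \end{bmatrix}$, $Z^T\begin{bmatrix} \mathbf{1}\\ -\mathbf{1} \end{bmatrix}=\begin{bmatrix} \gamma_1\mathbf{1}\\ \gamma_2\mathbf{1} \end{bmatrix}$ and $\gamma_1=\beta_2=-\alpha_2$,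 $\gamma_2=\beta_1=-\alpha_1$, $\gamma_1+\gamma_2=\beta_1+\beta_2=-(\alpha_1+\alpha_2)=l-k$. \end{enumerate} In particular, conditions 1 and 2 imply $e\alpha_1-f\alpha_2=kx_1-lx_2$, $c\beta_1-d\beta_2=py_1-qy_2$, and $a\gamma_1-b\gamma_2=rz_1-sz_2$.
   Context: $J_{p,q}$ denotes the $p\times q$ all-ones matrix (absent if $p=0$ or $q=0$) and $\mathbf{1}$ an all-ones column vector of appropriate size. Two $(0,1)$ matrices $A\neq B$ are Gram mates if $AA^T=BB^T$ and $A^TA=B^TB$. *)

(* Defs.v *)
From mathcomp Require Import all_boot all_order all_algebra.
Set Implicit Arguments. Unset Strict Implicit. Unset Printing Implicit Defensive.
Import Order.TTheory GRing.Theory Num.Theory.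
Local Open Scope ring_scope.

Definition J (p q : nat) : 'M[int]_(p, q) := const_mx 1.
Definition ones (n : nat) : 'cV[int]_n := const_mx 1.
Definition cst (n : nat) (x : int) : 'cV[int]_n := const_mx x.

Definition is01 (m n : nat) (A : 'M[int]_(m, n)) : Prop :=
  forall i j, A i j = 0 \/ A i j = 1.

Definition gram_mates (m n : nat) (A B : 'M[int]_(m, n)) : Prop :=
  [/\ is01 A, is01 B, A <> B,
      A *m A^T = B *m B^T & A^T *m A = B^T *m B].

Definition row6 (m n1 n2 n3 n4 n5 n6 : nat)
  (B1 : 'M[int]_(m, n1)) (B2 : 'M[int]_(m, n2)) (B3 : 'M[int]_(m, n3))
  (B4 : 'M[int]_(m, n4)) (B5 : 'M[int]_(m, n5)) (B6 : 'M[int]_(m, n6))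
  : 'M[int]_(m, n1 + (n2 + (n3 + (n4 + (n5 + n6))))) :=
  row_mx B1 (row_mx B2 (row_mx B3 (row_mx B4 (row_mx B5 B6)))).

Definition col6 (n m1 m2 m3 m4 m5 m6 : nat)
  (B1 : 'M[int]_(m1, n)) (B2 : 'M[int]_(m2, n)) (B3 : 'M[int]_(m3, n))
  (B4 : 'M[int]_(m4, n)) (B5 : 'M[int]_(m5, n)) (B6 : 'M[int]_(m6, n))
  : 'M[int]_(m1 + (m2 + (m3 + (m4 + (m5 + m6)))), n) :=
  col_mx B1 (col_mx B2 (col_mx B3 (col_mx B4 (col_mx B5 B6)))).

Definition Emx (k l p q r s a b c d e f : nat) :=
  col6
    (row6 (J k a) (- J k b) (J k c) (- J k d) (0 : 'M_(k, e)) (0 : 'M_(k, f)))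
    (row6 (- J l a) (J l b) (- J l c) (J l d) (0 : 'M_(l, e)) (0 : 'M_(l, f)))
    (row6 (J p a) (- J p b) (0 : 'M_(p, c)) (0 : 'M_(p, d)) (J p e) (- J p f))
    (row6 (- J q a) (J q b) (0 : 'M_(q, c)) (0 : 'M_(q, d)) (- J q e) (J q f))
    (row6 (0 : 'M_(r, a)) (0 : 'M_(r, b)) (J r c) (- J r d) (- J r e) (J r f))
    (row6 (0 : 'M_(s, a)) (0 : 'M_(s, b)) (- J s c) (J s d) (J s e) (- J s f)).

Definition Amx (k l p q r s a b c d e f : nat)
  (X11 : 'M[int]_(k, e)) (X12 : 'M[int]_(k, f))
  (X21 : 'M[int]_(l, e)) (X22 : 'M[int]_(l, f))
  (Y11 : 'M[int]_(p, c)) (Y12 : 'M[int]_(p, d))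
  (Y21 : 'M[int]_(q, c)) (Y22 : 'M[int]_(q, d))
  (Z11 : 'M[int]_(r, a)) (Z12 : 'M[int]_(r, b))
  (Z21 : 'M[int]_(s, a)) (Z22 : 'M[int]_(s, b)) :=
  col6
    (row6 (0 : 'M_(k, a)) (J k b) (0 : 'M_(k, c)) (J k d) X11 X12)
    (row6 (J l a) (0 : 'M_(l, b)) (J l c) (0 : 'M_(l, d)) X21 X22)
    (row6 (0 : 'M_(p, a)) (J p b) Y11 Y12 (0 : 'M_(p, e)) (J p f))
    (row6 (J q a) (0 : 'M_(q, b)) Y21 Y22 (J q e) (0 : 'M_(q, f)))
    (row6 Z11 Z12 (0 : 'M_(r, c)) (J r d) (J r e) (0 : 'M_(r, f)))
    (row6 Z21 Z22 (J s c) (0 : 'M_(s, d)) (0 : 'M_(s, e)) (J s f)).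

Definition cond1_with (k l p q r s a b c d e f : nat)
  (X : 'M[int]_(k + l, e + f)) (Y : 'M[int]_(p + q, c + d))
  (Z : 'M[int]_(r + s, a + b)) (x1 x2 y1 y2 z1 z2 : int) : Prop :=
  [/\ X *m col_mx (ones e) (- ones f) = col_mx (cst k x1) (cst l x2),
      Y *m col_mx (ones c) (- ones d) = col_mx (cst p y1) (cst q y2),
      Z *m col_mx (ones a) (- ones b) = col_mx (cst r z1) (cst s z2),
      (x1 = y2 /\ y2 = - z2) /\ (x2 = y1 /\ y1 = - z1) &
      [/\ x1 + x2 = y1 + y2, y1 + y2 = - (z1 + z2)
        & - (z1 + z2) = e%:Z - f%:Z]].

Definition cond2_with (k l p q r s a b c d e f : nat)
  (X : 'M[int]_(k + l, e + f)) (Y : 'M[int]_(p + q, c + d))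
  (Z : 'M[int]_(r + s, a + b)) (al1 al2 be1 be2 ga1 ga2 : int) : Prop :=
  [/\ X^T *m col_mx (ones k) (- ones l) = col_mx (cst e al1) (cst f al2),
      Y^T *m col_mx (ones p) (- ones q) = col_mx (cst c be1) (cst d be2),
      Z^T *m col_mx (ones r) (- ones s) = col_mx (cst a ga1) (cst b ga2),
      (ga1 = be2 /\ be2 = - al2) /\ (ga2 = be1 /\ be1 = - al1) &
      [/\ ga1 + ga2 = be1 + be2, be1 + be2 = - (al1 + al2)
        & - (al1 + al2) = l%:Z - k%:Z]].

(* Main.v *)
Require Import Defs.
From mathcomp Require Import all_boot all_order all_algebra.
From mathcomp Require Import zify.
Import Order.TTheory GRing.Theory Num.Theory.
Local Open Scope ring_scope.
Set Implicit Arguments. Unset Strict Implicit. Unset Printing Implicit Defensive.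

Variant blk6 (n1 n2 n3 n4 n5 n6 : nat) : 'I_(n1+(n2+(n3+(n4+(n5+n6))))) -> Type :=
| Blk1 (i : 'I_n1) : blk6 (lshift _ i)
| Blk2 (i : 'I_n2) : blk6 (rshift n1 (lshift _ i))
| Blk3 (i : 'I_n3) : blk6 (rshift n1 (rshift n2 (lshift _ i)))
| Blk4 (i : 'I_n4) : blk6 (rshift n1 (rshift n2 (rshift n3 (lshift _ i))))
| Blk5 (i : 'I_n5) : blk6 (rshift n1 (rshift n2 (rshift n3 (rshift n4 (lshift _ i)))))
| Blk6 (i : 'I_n6) : blk6 (rshift n1 (rshift n2 (rshift n3 (rshift n4 (rshift n5 i))))).

Lemma blk6P n1 n2 n3 n4 n5 n6 (i : 'I_(n1+(n2+(n3+(n4+(n5+n6)))))) : blk6 i.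
Proof.
case: (split_ordP i) => [j ->|j ->]; first exact: Blk1.
case: (split_ordP j) => [j2 ->|j2 ->]; first exact: Blk2.
case: (split_ordP j2) => [j3 ->|j3 ->]; first exact: Blk3.
case: (split_ordP j3) => [j4 ->|j4 ->]; first exact: Blk4.
case: (split_ordP j4) => [j5 ->|j5 ->]; first exact: Blk5.
exact: Blk6.
Qed.

Section Gen6.
Variables (n1 n2 n3 n4 n5 n6 m : nat).
Variables (B1 : 'M[int]_(m, n1)) (B2 : 'M[int]_(m, n2)) (B3 : 'M[int]_(m, n3))
  (B4 : 'M[int]_(m, n4)) (B5 : 'M[int]_(m, n5)) (B6 : 'M[int]_(m, n6)).
Variables (C1 : 'M[int]_(n1, m)) (C2 : 'M[int]_(n2, m)) (C3 : 'M[int]_(n3, m))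
  (C4 : 'M[int]_(n4, m)) (C5 : 'M[int]_(n5, m)) (C6 : 'M[int]_(n6, m)).

Lemma row6E1 i j : row6 B1 B2 B3 B4 B5 B6 i (lshift _ j) = B1 i j.
Proof. by rewrite /row6 row_mxEl. Qed.
Lemma row6E2 i j : row6 B1 B2 B3 B4 B5 B6 i (rshift n1 (lshift _ j)) = B2 i j.
Proof. by rewrite /row6 row_mxEr row_mxEl. Qed.
Lemma row6E3 i j : row6 B1 B2 B3 B4 B5 B6 i (rshift n1 (rshift n2 (lshift _ j))) = B3 i j.
Proof. by rewrite /row6 !row_mxEr row_mxEl. Qed.
Lemma row6E4 i j : row6 B1 B2 B3 B4 B5 B6 i (rshift n1 (rshift n2 (rshift n3 (lshift _ j)))) = B4 i j.
Proof. by rewrite /row6 !row_mxEr row_mxEl. Qed.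
Lemma row6E5 i j : row6 B1 B2 B3 B4 B5 B6 i (rshift n1 (rshift n2 (rshift n3 (rshift n4 (lshift _ j))))) = B5 i j.
Proof. by rewrite /row6 !row_mxEr row_mxEl. Qed.
Lemma row6E6 i j : row6 B1 B2 B3 B4 B5 B6 i (rshift n1 (rshift n2 (rshift n3 (rshift n4 (rshift n5 j))))) = B6 i j.
Proof. by rewrite /row6 !row_mxEr. Qed.

Lemma col6E1 i j : col6 C1 C2 C3 C4 C5 C6 (lshift _ i) j = C1 i j.
Proof. by rewrite /col6 col_mxEu. Qed.
Lemma col6E2 i j : col6 C1 C2 C3 C4 C5 C6 (rshift n1 (lshift _ i)) j = C2 i j.
Proof. by rewrite /col6 col_mxEd col_mxEu. Qed.
Lemma col6E3 i j : col6 C1 C2 C3 C4 C5 C6 (rshift n1 (rshift n2 (lshift _ i))) j = C3 i j.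
Proof. by rewrite /col6 !col_mxEd col_mxEu. Qed.
Lemma col6E4 i j : col6 C1 C2 C3 C4 C5 C6 (rshift n1 (rshift n2 (rshift n3 (lshift _ i)))) j = C4 i j.
Proof. by rewrite /col6 !col_mxEd col_mxEu. Qed.
Lemma col6E5 i j : col6 C1 C2 C3 C4 C5 C6 (rshift n1 (rshift n2 (rshift n3 (rshift n4 (lshift _ i))))) j = C5 i j.
Proof. by rewrite /col6 !col_mxEd col_mxEu. Qed.
Lemma col6E6 i j : col6 C1 C2 C3 C4 C5 C6 (rshift n1 (rshift n2 (rshift n3 (rshift n4 (rshift n5 i))))) j = C6 i j.
Proof. by rewrite /col6 !col_mxEd. Qed.

Lemma col6R1 i : row (lshift _ i) (col6 C1 C2 C3 C4 C5 C6) = row i C1.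
Proof. by apply/matrixP=> x y; rewrite [LHS]mxE [RHS]mxE col6E1. Qed.
Lemma col6R2 i : row (rshift n1 (lshift _ i)) (col6 C1 C2 C3 C4 C5 C6) = row i C2.
Proof. by apply/matrixP=> x y; rewrite [LHS]mxE [RHS]mxE col6E2. Qed.
Lemma col6R3 i : row (rshift n1 (rshift n2 (lshift _ i))) (col6 C1 C2 C3 C4 C5 C6) = row i C3.
Proof. by apply/matrixP=> x y; rewrite [LHS]mxE [RHS]mxE col6E3. Qed.
Lemma col6R4 i : row (rshift n1 (rshift n2 (rshift n3 (lshift _ i)))) (col6 C1 C2 C3 C4 C5 C6) = row i C4.
Proof. by apply/matrixP=> x y; rewrite [LHS]mxE [RHS]mxE col6E4. Qed.
Lemma col6R5 i : row (rshift n1 (rshift n2 (rshift n3 (rshift n4 (lshift _ i))))) (col6 C1 C2 C3 C4 C5 C6) = row i C5.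
Proof. by apply/matrixP=> x y; rewrite [LHS]mxE [RHS]mxE col6E5. Qed.
Lemma col6R6 i : row (rshift n1 (rshift n2 (rshift n3 (rshift n4 (rshift n5 i))))) (col6 C1 C2 C3 C4 C5 C6) = row i C6.
Proof. by apply/matrixP=> x y; rewrite [LHS]mxE [RHS]mxE col6E6. Qed.

End Gen6.

Lemma row6R n1 n2 n3 n4 n5 n6 m (B1 : 'M[int]_(m, n1)) (B2 : 'M[int]_(m, n2)) (B3 : 'M[int]_(m, n3))
  (B4 : 'M[int]_(m, n4)) (B5 : 'M[int]_(m, n5)) (B6 : 'M[int]_(m, n6)) i : row i (row6 B1 B2 B3 B4 B5 B6) =
  row6 (row i B1) (row i B2) (row i B3) (row i B4) (row i B5) (row i B6).
Proof.
apply/matrixP=> x y; rewrite [LHS]mxE.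
case: (blk6P y) => j;
 rewrite ?(row6E1, row6E2, row6E3, row6E4, row6E5, row6E6) mxE //.
Qed.

Definition dot n (u v : 'rV[int]_n) : int := (u *m v^T) ord0 ord0.
Definition rsum m n (M : 'M[int]_(m, n)) (i : 'I_m) : int := (M *m ones n) i ord0.

Lemma mulmx_dot m n p (A : 'M[int]_(m, n)) (B : 'M[int]_(p, n)) i j :
  (A *m B^T) i j = dot (row i A) (row j B).
Proof. by rewrite /dot !mxE; apply: eq_bigr => x _; rewrite !mxE. Qed.

Lemma dot6 n1 n2 n3 n4 n5 n6 (u1 : 'rV[int]_n1) (u2 : 'rV[int]_n2) (u3 : 'rV[int]_n3)
  (u4 : 'rV[int]_n4) (u5 : 'rV[int]_n5) (u6 : 'rV[int]_n6)
  (v1 : 'rV[int]_n1) (v2 : 'rV[int]_n2) (v3 : 'rV[int]_n3)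
  (v4 : 'rV[int]_n4) (v5 : 'rV[int]_n5) (v6 : 'rV[int]_n6) :
  dot (row6 u1 u2 u3 u4 u5 u6) (row6 v1 v2 v3 v4 v5 v6) =
  dot u1 v1 + dot u2 v2 + dot u3 v3 + dot u4 v4 + dot u5 v5 + dot u6 v6.
Proof. by rewrite /dot /row6 !tr_row_mx !mul_row_col !mxE !addrA. Qed.

Lemma dot_cc n (x y : int) : dot (const_mx x : 'rV_n) (const_mx y) = x * y *+ n.
Proof.
rewrite /dot mxE (eq_bigr (fun _ => x * y)) ?sumr_const ?card_ord // => j _.
by rewrite !mxE.
Qed.
Lemma dot_Mc m n (M : 'M[int]_(m, n)) i y : dot (row i M) (const_mx y) = rsum M i * y.
Proof.
rewrite /dot /rsum !mxE mulr_suml; apply: eq_bigr => j _; by rewrite !mxE mulr1.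
Qed.
Lemma dot_cM m n (M : 'M[int]_(m, n)) i x : dot (const_mx x) (row i M) = x * rsum M i.
Proof.
rewrite /dot /rsum !mxE mulr_sumr; apply: eq_bigr => j _; by rewrite !mxE mulr1 mulrC.
Qed.
Lemma dot0l n (v : 'rV[int]_n) : dot 0 v = 0.
Proof. by rewrite /dot mul0mx mxE. Qed.
Lemma dot0r n (v : 'rV[int]_n) : dot v 0 = 0.
Proof. by rewrite /dot trmx0 mulmx0 mxE. Qed.
Lemma rowc m n (i : 'I_m) (x : int) : row i (const_mx x : 'M_(m, n)) = const_mx x.
Proof. by apply/matrixP=> ? ?; rewrite !mxE. Qed.
Lemma oppc m n (x : int) : - (const_mx x : 'M_(m, n)) = const_mx (- x).
Proof. by apply/matrixP=> ? ?; rewrite !mxE. Qed.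


Lemma addmxE' m n (M N : 'M[int]_(m, n)) i j : (M + N) i j = M i j + N i j.
Proof. by rewrite mxE. Qed.
Lemma oppmxE' m n (M : 'M[int]_(m, n)) i j : (- M) i j = - M i j.
Proof. by rewrite mxE. Qed.

Definition Dm m n (A E : 'M[int]_(m, n)) := A *m E^T + E *m A^T + E *m E^T.

Lemma Dm_entry m n (A E : 'M[int]_(m, n)) i j :
  Dm A E i j = dot (row i A) (row j E) + dot (row i E) (row j A) + dot (row i E) (row j E).
Proof. by rewrite /Dm !addmxE' !mulmx_dot. Qed.

Lemma Dm_eval m n (A E : 'M[int]_(m, n)) i j uA uE vA vE :
  row i A = uA -> row i E = uE -> row j A = vA -> row j E = vE ->
  Dm A E i j = dot uA vE + dot uE vA + dot uE vE.
Proof. by move=> <- <- <- <-; rewrite Dm_entry. Qed.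

Lemma bvU m1 m2 n1 n2 (M11 : 'M[int]_(m1, n1)) M12 (M21 : 'M[int]_(m2, n1)) M22 i :
  (block_mx M11 M12 M21 M22 *m col_mx (ones n1) (- ones n2)) (lshift m2 i) ord0
  = rsum M11 i - rsum M12 i.
Proof. by rewrite mul_block_col col_mxEu addmxE' mulmxN oppmxE'. Qed.
Lemma bvD m1 m2 n1 n2 (M11 : 'M[int]_(m1, n1)) M12 (M21 : 'M[int]_(m2, n1)) M22 i :
  (block_mx M11 M12 M21 M22 *m col_mx (ones n1) (- ones n2)) (rshift m1 i) ord0
  = rsum M21 i - rsum M22 i.
Proof. by rewrite mul_block_col col_mxEd addmxE' mulmxN oppmxE'. Qed.


Lemma bv_eq m1 m2 n1 n2 (M11 : 'M[int]_(m1, n1)) M12 (M21 : 'M[int]_(m2, n1)) M22 x1 x2 :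
  block_mx M11 M12 M21 M22 *m col_mx (ones n1) (- ones n2) = col_mx (cst m1 x1) (cst m2 x2) <->
  (forall i, rsum M11 i - rsum M12 i = x1) /\ (forall i, rsum M21 i - rsum M22 i = x2).
Proof.
split.
  move=> h; split=> i.
    by have := congr1 (fun M : 'M[int]_(m1 + m2, 1) => M (lshift m2 i) ord0) h; rewrite bvU col_mxEu mxE.
  by have := congr1 (fun M : 'M[int]_(m1 + m2, 1) => M (rshift m1 i) ord0) h; rewrite bvD col_mxEd mxE.
case=> h1 h2; apply/matrixP => i j; rewrite (ord1 j).
by case: (split_ordP i) => i0 ->; rewrite ?bvU ?bvD ?col_mxEu ?col_mxEd mxE.
Qed.

Lemma gram_Dm m n (A E : 'M[int]_(m, n)) :
  A *m A^T = (A + E) *m (A + E)^T <-> (forall i j, Dm A E i j = 0).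
Proof.
have eq : (A + E) *m (A + E)^T = A *m A^T + Dm A E.
  by rewrite /Dm raddfD mulmxDl !mulmxDr !addrA.
rewrite eq; split=> [h i j|h].
  have -> : Dm A E = 0 by apply: (addrI (A *m A^T)); rewrite addr0 -h.
  by rewrite mxE.
have -> : Dm A E = 0 by apply/matrixP=> i j; rewrite h mxE.
by rewrite addr0.
Qed.

Section Main.
Variables (k l p q r s a b c d e f : nat).
Variables (X11 : 'M[int]_(k, e)) (X12 : 'M[int]_(k, f))
  (X21 : 'M[int]_(l, e)) (X22 : 'M[int]_(l, f))
  (Y11 : 'M[int]_(p, c)) (Y12 : 'M[int]_(p, d))
  (Y21 : 'M[int]_(q, c)) (Y22 : 'M[int]_(q, d))
  (Z11 : 'M[int]_(r, a)) (Z12 : 'M[int]_(r, b))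
  (Z21 : 'M[int]_(s, a)) (Z22 : 'M[int]_(s, b)).

Definition AA := Amx X11 X12 X21 X22 Y11 Y12 Y21 Y22 Z11 Z12 Z21 Z22.
Definition EE := Emx k l p q r s a b c d e f.
Definition xv := block_mx X11 X12 X21 X22 *m col_mx (ones e) (- ones f).
Definition yv := block_mx Y11 Y12 Y21 Y22 *m col_mx (ones c) (- ones d).
Definition zv := block_mx Z11 Z12 Z21 Z22 *m col_mx (ones a) (- ones b).
Definition eps : int := e%:Z - f%:Z.
Definition Nv := col6 (usubmx xv) (const_mx eps - dsubmx xv)
   (const_mx eps - usubmx yv) (dsubmx yv) (usubmx zv + const_mx eps) (- dsubmx zv).
Definition NN i := Nv i ord0.
Definition GG i := (col6 (cst k 0) (cst l 0) (cst p 1) (cst q 1) (cst r 2) (cst s 2)) i ord0.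

Lemma NN1 i : NN (lshift _ i) = rsum X11 i - rsum X12 i.
Proof. by rewrite /NN /Nv col6E1 mxE bvU. Qed.
Lemma NN2 i : NN (rshift k (lshift _ i)) = eps - (rsum X21 i - rsum X22 i).
Proof. by rewrite /NN /Nv col6E2 addmxE' oppmxE' mxE [dsubmx _ _ _]mxE bvD. Qed.
Lemma NN3 i : NN (rshift k (rshift l (lshift _ i))) = eps - (rsum Y11 i - rsum Y12 i).
Proof. by rewrite /NN /Nv col6E3 addmxE' oppmxE' mxE [usubmx _ _ _]mxE bvU. Qed.
Lemma NN4 i : NN (rshift k (rshift l (rshift p (lshift _ i)))) = rsum Y21 i - rsum Y22 i.
Proof. by rewrite /NN /Nv col6E4 mxE bvD. Qed.
Lemma NN5 i : NN (rshift k (rshift l (rshift p (rshift q (lshift _ i))))) = rsum Z11 i - rsum Z12 i + eps.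
Proof. by rewrite /NN /Nv col6E5 addmxE' [usubmx _ _ _]mxE bvU mxE. Qed.
Lemma NN6 i : NN (rshift k (rshift l (rshift p (rshift q (rshift r i))))) = - (rsum Z21 i - rsum Z22 i).
Proof. by rewrite /NN /Nv col6E6 oppmxE' mxE bvD. Qed.
Lemma GG1 i : GG (lshift _ i) = 0. Proof. by rewrite /GG col6E1 mxE. Qed.
Lemma GG2 i : GG (rshift k (lshift _ i)) = 0. Proof. by rewrite /GG col6E2 mxE. Qed.
Lemma GG3 i : GG (rshift k (rshift l (lshift _ i))) = 1. Proof. by rewrite /GG col6E3 mxE. Qed.
Lemma GG4 i : GG (rshift k (rshift l (rshift p (lshift _ i)))) = 1. Proof. by rewrite /GG col6E4 mxE. Qed.
Lemma GG5 i : GG (rshift k (rshift l (rshift p (rshift q (lshift _ i))))) = 2. Proof. by rewrite /GG col6E5 mxE. Qed.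
Lemma GG6 i : GG (rshift k (rshift l (rshift p (rshift q (rshift r i))))) = 2. Proof. by rewrite /GG col6E6 mxE. Qed.

Hypothesis H1 : a%:Z - b%:Z + c%:Z - d%:Z = 0.
Hypothesis H2 : a%:Z - b%:Z + e%:Z - f%:Z = 0.
Hypothesis H3 : c%:Z - d%:Z - e%:Z + f%:Z = 0.



Lemma AAR1 i : row (lshift _ i) AA = row6 0 (const_mx 1) 0 (const_mx 1) (row i X11) (row i X12).
Proof. by rewrite /AA /Amx /J col6R1 row6R ?row0 ?rowc. Qed.
Lemma AAR2 i : row (rshift k (lshift _ i)) AA = row6 (const_mx 1) 0 (const_mx 1) 0 (row i X21) (row i X22).
Proof. by rewrite /AA /Amx /J col6R2 row6R ?row0 ?rowc. Qed.
Lemma AAR3 i : row (rshift k (rshift l (lshift _ i))) AA = row6 0 (const_mx 1) (row i Y11) (row i Y12) 0 (const_mx 1).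
Proof. by rewrite /AA /Amx /J col6R3 row6R ?row0 ?rowc. Qed.
Lemma AAR4 i : row (rshift k (rshift l (rshift p (lshift _ i)))) AA = row6 (const_mx 1) 0 (row i Y21) (row i Y22) (const_mx 1) 0.
Proof. by rewrite /AA /Amx /J col6R4 row6R ?row0 ?rowc. Qed.
Lemma AAR5 i : row (rshift k (rshift l (rshift p (rshift q (lshift _ i))))) AA = row6 (row i Z11) (row i Z12) 0 (const_mx 1) (const_mx 1) 0.
Proof. by rewrite /AA /Amx /J col6R5 row6R ?row0 ?rowc. Qed.
Lemma AAR6 i : row (rshift k (rshift l (rshift p (rshift q (rshift r i))))) AA = row6 (row i Z21) (row i Z22) (const_mx 1) 0 0 (const_mx 1).
Proof. by rewrite /AA /Amx /J col6R6 row6R ?row0 ?rowc. Qed.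
Lemma EER1 i : row (lshift _ i) EE = row6 (const_mx 1) (const_mx (-1)) (const_mx 1) (const_mx (-1)) 0 0.
Proof. by rewrite /EE /Emx /J ?oppc col6R1 row6R ?row0 ?rowc. Qed.
Lemma EER2 i : row (rshift k (lshift _ i)) EE = row6 (const_mx (-1)) (const_mx 1) (const_mx (-1)) (const_mx 1) 0 0.
Proof. by rewrite /EE /Emx /J ?oppc col6R2 row6R ?row0 ?rowc. Qed.
Lemma EER3 i : row (rshift k (rshift l (lshift _ i))) EE = row6 (const_mx 1) (const_mx (-1)) 0 0 (const_mx 1) (const_mx (-1)).
Proof. by rewrite /EE /Emx /J ?oppc col6R3 row6R ?row0 ?rowc. Qed.
Lemma EER4 i : row (rshift k (rshift l (rshift p (lshift _ i)))) EE = row6 (const_mx (-1)) (const_mx 1) 0 0 (const_mx (-1)) (const_mx 1).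
Proof. by rewrite /EE /Emx /J ?oppc col6R4 row6R ?row0 ?rowc. Qed.
Lemma EER5 i : row (rshift k (rshift l (rshift p (rshift q (lshift _ i))))) EE = row6 0 0 (const_mx 1) (const_mx (-1)) (const_mx (-1)) (const_mx 1).
Proof. by rewrite /EE /Emx /J ?oppc col6R5 row6R ?row0 ?rowc. Qed.
Lemma EER6 i : row (rshift k (rshift l (rshift p (rshift q (rshift r i))))) EE = row6 0 0 (const_mx (-1)) (const_mx 1) (const_mx 1) (const_mx (-1)).
Proof. by rewrite /EE /Emx /J ?oppc col6R6 row6R ?row0 ?rowc. Qed.

Lemma D11 i0 j0 : Dm AA EE (lshift _ i0) (lshift _ j0) = 0 <-> (GG (lshift _ i0) = GG (lshift _ j0) \/ NN (lshift _ i0) = NN (lshift _ j0)).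
Proof.
rewrite (Dm_eval (AAR1 i0) (EER1 i0) (AAR1 j0) (EER1 j0)) !dot6 ?(dot_cc, dot_Mc, dot_cM, dot0l, dot0r).
rewrite NN1 NN1 GG1 GG1 /eps; lia.
Qed.
Lemma D12 i0 j0 : Dm AA EE (lshift _ i0) (rshift k (lshift _ j0)) = 0 <-> (GG (lshift _ i0) = GG (rshift k (lshift _ j0)) \/ NN (lshift _ i0) = NN (rshift k (lshift _ j0))).
Proof.
rewrite (Dm_eval (AAR1 i0) (EER1 i0) (AAR2 j0) (EER2 j0)) !dot6 ?(dot_cc, dot_Mc, dot_cM, dot0l, dot0r).
rewrite NN1 NN2 GG1 GG2 /eps; lia.
Qed.
Lemma D13 i0 j0 : Dm AA EE (lshift _ i0) (rshift k (rshift l (lshift _ j0))) = 0 <-> (GG (lshift _ i0) = GG (rshift k (rshift l (lshift _ j0))) \/ NN (lshift _ i0) = NN (rshift k (rshift l (lshift _ j0)))).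
Proof.
rewrite (Dm_eval (AAR1 i0) (EER1 i0) (AAR3 j0) (EER3 j0)) !dot6 ?(dot_cc, dot_Mc, dot_cM, dot0l, dot0r).
rewrite NN1 NN3 GG1 GG3 /eps; lia.
Qed.
Lemma D14 i0 j0 : Dm AA EE (lshift _ i0) (rshift k (rshift l (rshift p (lshift _ j0)))) = 0 <-> (GG (lshift _ i0) = GG (rshift k (rshift l (rshift p (lshift _ j0)))) \/ NN (lshift _ i0) = NN (rshift k (rshift l (rshift p (lshift _ j0))))).
Proof.
rewrite (Dm_eval (AAR1 i0) (EER1 i0) (AAR4 j0) (EER4 j0)) !dot6 ?(dot_cc, dot_Mc, dot_cM, dot0l, dot0r).
rewrite NN1 NN4 GG1 GG4 /eps; lia.
Qed.
Lemma D15 i0 j0 : Dm AA EE (lshift _ i0) (rshift k (rshift l (rshift p (rshift q (lshift _ j0))))) = 0 <-> (GG (lshift _ i0) = GG (rshift k (rshift l (rshift p (rshift q (lshift _ j0))))) \/ NN (lshift _ i0) = NN (rshift k (rshift l (rshift p (rshift q (lshift _ j0)))))).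
Proof.
rewrite (Dm_eval (AAR1 i0) (EER1 i0) (AAR5 j0) (EER5 j0)) !dot6 ?(dot_cc, dot_Mc, dot_cM, dot0l, dot0r).
rewrite NN1 NN5 GG1 GG5 /eps; lia.
Qed.
Lemma D16 i0 j0 : Dm AA EE (lshift _ i0) (rshift k (rshift l (rshift p (rshift q (rshift r j0))))) = 0 <-> (GG (lshift _ i0) = GG (rshift k (rshift l (rshift p (rshift q (rshift r j0))))) \/ NN (lshift _ i0) = NN (rshift k (rshift l (rshift p (rshift q (rshift r j0)))))).
Proof.
rewrite (Dm_eval (AAR1 i0) (EER1 i0) (AAR6 j0) (EER6 j0)) !dot6 ?(dot_cc, dot_Mc, dot_cM, dot0l, dot0r).
rewrite NN1 NN6 GG1 GG6 /eps; lia.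
Qed.
Lemma D21 i0 j0 : Dm AA EE (rshift k (lshift _ i0)) (lshift _ j0) = 0 <-> (GG (rshift k (lshift _ i0)) = GG (lshift _ j0) \/ NN (rshift k (lshift _ i0)) = NN (lshift _ j0)).
Proof.
rewrite (Dm_eval (AAR2 i0) (EER2 i0) (AAR1 j0) (EER1 j0)) !dot6 ?(dot_cc, dot_Mc, dot_cM, dot0l, dot0r).
rewrite NN2 NN1 GG2 GG1 /eps; lia.
Qed.
Lemma D22 i0 j0 : Dm AA EE (rshift k (lshift _ i0)) (rshift k (lshift _ j0)) = 0 <-> (GG (rshift k (lshift _ i0)) = GG (rshift k (lshift _ j0)) \/ NN (rshift k (lshift _ i0)) = NN (rshift k (lshift _ j0))).
Proof.
rewrite (Dm_eval (AAR2 i0) (EER2 i0) (AAR2 j0) (EER2 j0)) !dot6 ?(dot_cc, dot_Mc, dot_cM, dot0l, dot0r).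
rewrite NN2 NN2 GG2 GG2 /eps; lia.
Qed.
Lemma D23 i0 j0 : Dm AA EE (rshift k (lshift _ i0)) (rshift k (rshift l (lshift _ j0))) = 0 <-> (GG (rshift k (lshift _ i0)) = GG (rshift k (rshift l (lshift _ j0))) \/ NN (rshift k (lshift _ i0)) = NN (rshift k (rshift l (lshift _ j0)))).
Proof.
rewrite (Dm_eval (AAR2 i0) (EER2 i0) (AAR3 j0) (EER3 j0)) !dot6 ?(dot_cc, dot_Mc, dot_cM, dot0l, dot0r).
rewrite NN2 NN3 GG2 GG3 /eps; lia.
Qed.
Lemma D24 i0 j0 : Dm AA EE (rshift k (lshift _ i0)) (rshift k (rshift l (rshift p (lshift _ j0)))) = 0 <-> (GG (rshift k (lshift _ i0)) = GG (rshift k (rshift l (rshift p (lshift _ j0)))) \/ NN (rshift k (lshift _ i0)) = NN (rshift k (rshift l (rshift p (lshift _ j0))))).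
Proof.
rewrite (Dm_eval (AAR2 i0) (EER2 i0) (AAR4 j0) (EER4 j0)) !dot6 ?(dot_cc, dot_Mc, dot_cM, dot0l, dot0r).
rewrite NN2 NN4 GG2 GG4 /eps; lia.
Qed.
Lemma D25 i0 j0 : Dm AA EE (rshift k (lshift _ i0)) (rshift k (rshift l (rshift p (rshift q (lshift _ j0))))) = 0 <-> (GG (rshift k (lshift _ i0)) = GG (rshift k (rshift l (rshift p (rshift q (lshift _ j0))))) \/ NN (rshift k (lshift _ i0)) = NN (rshift k (rshift l (rshift p (rshift q (lshift _ j0)))))).
Proof.
rewrite (Dm_eval (AAR2 i0) (EER2 i0) (AAR5 j0) (EER5 j0)) !dot6 ?(dot_cc, dot_Mc, dot_cM, dot0l, dot0r).
rewrite NN2 NN5 GG2 GG5 /eps; lia.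
Qed.
Lemma D26 i0 j0 : Dm AA EE (rshift k (lshift _ i0)) (rshift k (rshift l (rshift p (rshift q (rshift r j0))))) = 0 <-> (GG (rshift k (lshift _ i0)) = GG (rshift k (rshift l (rshift p (rshift q (rshift r j0))))) \/ NN (rshift k (lshift _ i0)) = NN (rshift k (rshift l (rshift p (rshift q (rshift r j0)))))).
Proof.
rewrite (Dm_eval (AAR2 i0) (EER2 i0) (AAR6 j0) (EER6 j0)) !dot6 ?(dot_cc, dot_Mc, dot_cM, dot0l, dot0r).
rewrite NN2 NN6 GG2 GG6 /eps; lia.
Qed.
Lemma D31 i0 j0 : Dm AA EE (rshift k (rshift l (lshift _ i0))) (lshift _ j0) = 0 <-> (GG (rshift k (rshift l (lshift _ i0))) = GG (lshift _ j0) \/ NN (rshift k (rshift l (lshift _ i0))) = NN (lshift _ j0)).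
Proof.
rewrite (Dm_eval (AAR3 i0) (EER3 i0) (AAR1 j0) (EER1 j0)) !dot6 ?(dot_cc, dot_Mc, dot_cM, dot0l, dot0r).
rewrite NN3 NN1 GG3 GG1 /eps; lia.
Qed.
Lemma D32 i0 j0 : Dm AA EE (rshift k (rshift l (lshift _ i0))) (rshift k (lshift _ j0)) = 0 <-> (GG (rshift k (rshift l (lshift _ i0))) = GG (rshift k (lshift _ j0)) \/ NN (rshift k (rshift l (lshift _ i0))) = NN (rshift k (lshift _ j0))).
Proof.
rewrite (Dm_eval (AAR3 i0) (EER3 i0) (AAR2 j0) (EER2 j0)) !dot6 ?(dot_cc, dot_Mc, dot_cM, dot0l, dot0r).
rewrite NN3 NN2 GG3 GG2 /eps; lia.
Qed.
Lemma D33 i0 j0 : Dm AA EE (rshift k (rshift l (lshift _ i0))) (rshift k (rshift l (lshift _ j0))) = 0 <-> (GG (rshift k (rshift l (lshift _ i0))) = GG (rshift k (rshift l (lshift _ j0))) \/ NN (rshift k (rshift l (lshift _ i0))) = NN (rshift k (rshift l (lshift _ j0)))).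
Proof.
rewrite (Dm_eval (AAR3 i0) (EER3 i0) (AAR3 j0) (EER3 j0)) !dot6 ?(dot_cc, dot_Mc, dot_cM, dot0l, dot0r).
rewrite NN3 NN3 GG3 GG3 /eps; lia.
Qed.
Lemma D34 i0 j0 : Dm AA EE (rshift k (rshift l (lshift _ i0))) (rshift k (rshift l (rshift p (lshift _ j0)))) = 0 <-> (GG (rshift k (rshift l (lshift _ i0))) = GG (rshift k (rshift l (rshift p (lshift _ j0)))) \/ NN (rshift k (rshift l (lshift _ i0))) = NN (rshift k (rshift l (rshift p (lshift _ j0))))).
Proof.
rewrite (Dm_eval (AAR3 i0) (EER3 i0) (AAR4 j0) (EER4 j0)) !dot6 ?(dot_cc, dot_Mc, dot_cM, dot0l, dot0r).
rewrite NN3 NN4 GG3 GG4 /eps; lia.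
Qed.
Lemma D35 i0 j0 : Dm AA EE (rshift k (rshift l (lshift _ i0))) (rshift k (rshift l (rshift p (rshift q (lshift _ j0))))) = 0 <-> (GG (rshift k (rshift l (lshift _ i0))) = GG (rshift k (rshift l (rshift p (rshift q (lshift _ j0))))) \/ NN (rshift k (rshift l (lshift _ i0))) = NN (rshift k (rshift l (rshift p (rshift q (lshift _ j0)))))).
Proof.
rewrite (Dm_eval (AAR3 i0) (EER3 i0) (AAR5 j0) (EER5 j0)) !dot6 ?(dot_cc, dot_Mc, dot_cM, dot0l, dot0r).
rewrite NN3 NN5 GG3 GG5 /eps; lia.
Qed.
Lemma D36 i0 j0 : Dm AA EE (rshift k (rshift l (lshift _ i0))) (rshift k (rshift l (rshift p (rshift q (rshift r j0))))) = 0 <-> (GG (rshift k (rshift l (lshift _ i0))) = GG (rshift k (rshift l (rshift p (rshift q (rshift r j0))))) \/ NN (rshift k (rshift l (lshift _ i0))) = NN (rshift k (rshift l (rshift p (rshift q (rshift r j0)))))).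
Proof.
rewrite (Dm_eval (AAR3 i0) (EER3 i0) (AAR6 j0) (EER6 j0)) !dot6 ?(dot_cc, dot_Mc, dot_cM, dot0l, dot0r).
rewrite NN3 NN6 GG3 GG6 /eps; lia.
Qed.
Lemma D41 i0 j0 : Dm AA EE (rshift k (rshift l (rshift p (lshift _ i0)))) (lshift _ j0) = 0 <-> (GG (rshift k (rshift l (rshift p (lshift _ i0)))) = GG (lshift _ j0) \/ NN (rshift k (rshift l (rshift p (lshift _ i0)))) = NN (lshift _ j0)).
Proof.
rewrite (Dm_eval (AAR4 i0) (EER4 i0) (AAR1 j0) (EER1 j0)) !dot6 ?(dot_cc, dot_Mc, dot_cM, dot0l, dot0r).
rewrite NN4 NN1 GG4 GG1 /eps; lia.
Qed.
Lemma D42 i0 j0 : Dm AA EE (rshift k (rshift l (rshift p (lshift _ i0)))) (rshift k (lshift _ j0)) = 0 <-> (GG (rshift k (rshift l (rshift p (lshift _ i0)))) = GG (rshift k (lshift _ j0)) \/ NN (rshift k (rshift l (rshift p (lshift _ i0)))) = NN (rshift k (lshift _ j0))).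
Proof.
rewrite (Dm_eval (AAR4 i0) (EER4 i0) (AAR2 j0) (EER2 j0)) !dot6 ?(dot_cc, dot_Mc, dot_cM, dot0l, dot0r).
rewrite NN4 NN2 GG4 GG2 /eps; lia.
Qed.
Lemma D43 i0 j0 : Dm AA EE (rshift k (rshift l (rshift p (lshift _ i0)))) (rshift k (rshift l (lshift _ j0))) = 0 <-> (GG (rshift k (rshift l (rshift p (lshift _ i0)))) = GG (rshift k (rshift l (lshift _ j0))) \/ NN (rshift k (rshift l (rshift p (lshift _ i0)))) = NN (rshift k (rshift l (lshift _ j0)))).
Proof.
rewrite (Dm_eval (AAR4 i0) (EER4 i0) (AAR3 j0) (EER3 j0)) !dot6 ?(dot_cc, dot_Mc, dot_cM, dot0l, dot0r).
rewrite NN4 NN3 GG4 GG3 /eps; lia.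
Qed.
Lemma D44 i0 j0 : Dm AA EE (rshift k (rshift l (rshift p (lshift _ i0)))) (rshift k (rshift l (rshift p (lshift _ j0)))) = 0 <-> (GG (rshift k (rshift l (rshift p (lshift _ i0)))) = GG (rshift k (rshift l (rshift p (lshift _ j0)))) \/ NN (rshift k (rshift l (rshift p (lshift _ i0)))) = NN (rshift k (rshift l (rshift p (lshift _ j0))))).
Proof.
rewrite (Dm_eval (AAR4 i0) (EER4 i0) (AAR4 j0) (EER4 j0)) !dot6 ?(dot_cc, dot_Mc, dot_cM, dot0l, dot0r).
rewrite NN4 NN4 GG4 GG4 /eps; lia.
Qed.
Lemma D45 i0 j0 : Dm AA EE (rshift k (rshift l (rshift p (lshift _ i0)))) (rshift k (rshift l (rshift p (rshift q (lshift _ j0))))) = 0 <-> (GG (rshift k (rshift l (rshift p (lshift _ i0)))) = GG (rshift k (rshift l (rshift p (rshift q (lshift _ j0))))) \/ NN (rshift k (rshift l (rshift p (lshift _ i0)))) = NN (rshift k (rshift l (rshift p (rshift q (lshift _ j0)))))).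
Proof.
rewrite (Dm_eval (AAR4 i0) (EER4 i0) (AAR5 j0) (EER5 j0)) !dot6 ?(dot_cc, dot_Mc, dot_cM, dot0l, dot0r).
rewrite NN4 NN5 GG4 GG5 /eps; lia.
Qed.
Lemma D46 i0 j0 : Dm AA EE (rshift k (rshift l (rshift p (lshift _ i0)))) (rshift k (rshift l (rshift p (rshift q (rshift r j0))))) = 0 <-> (GG (rshift k (rshift l (rshift p (lshift _ i0)))) = GG (rshift k (rshift l (rshift p (rshift q (rshift r j0))))) \/ NN (rshift k (rshift l (rshift p (lshift _ i0)))) = NN (rshift k (rshift l (rshift p (rshift q (rshift r j0)))))).
Proof.
rewrite (Dm_eval (AAR4 i0) (EER4 i0) (AAR6 j0) (EER6 j0)) !dot6 ?(dot_cc, dot_Mc, dot_cM, dot0l, dot0r).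
rewrite NN4 NN6 GG4 GG6 /eps; lia.
Qed.
Lemma D51 i0 j0 : Dm AA EE (rshift k (rshift l (rshift p (rshift q (lshift _ i0))))) (lshift _ j0) = 0 <-> (GG (rshift k (rshift l (rshift p (rshift q (lshift _ i0))))) = GG (lshift _ j0) \/ NN (rshift k (rshift l (rshift p (rshift q (lshift _ i0))))) = NN (lshift _ j0)).
Proof.
rewrite (Dm_eval (AAR5 i0) (EER5 i0) (AAR1 j0) (EER1 j0)) !dot6 ?(dot_cc, dot_Mc, dot_cM, dot0l, dot0r).
rewrite NN5 NN1 GG5 GG1 /eps; lia.
Qed.
Lemma D52 i0 j0 : Dm AA EE (rshift k (rshift l (rshift p (rshift q (lshift _ i0))))) (rshift k (lshift _ j0)) = 0 <-> (GG (rshift k (rshift l (rshift p (rshift q (lshift _ i0))))) = GG (rshift k (lshift _ j0)) \/ NN (rshift k (rshift l (rshift p (rshift q (lshift _ i0))))) = NN (rshift k (lshift _ j0))).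
Proof.
rewrite (Dm_eval (AAR5 i0) (EER5 i0) (AAR2 j0) (EER2 j0)) !dot6 ?(dot_cc, dot_Mc, dot_cM, dot0l, dot0r).
rewrite NN5 NN2 GG5 GG2 /eps; lia.
Qed.
Lemma D53 i0 j0 : Dm AA EE (rshift k (rshift l (rshift p (rshift q (lshift _ i0))))) (rshift k (rshift l (lshift _ j0))) = 0 <-> (GG (rshift k (rshift l (rshift p (rshift q (lshift _ i0))))) = GG (rshift k (rshift l (lshift _ j0))) \/ NN (rshift k (rshift l (rshift p (rshift q (lshift _ i0))))) = NN (rshift k (rshift l (lshift _ j0)))).
Proof.
rewrite (Dm_eval (AAR5 i0) (EER5 i0) (AAR3 j0) (EER3 j0)) !dot6 ?(dot_cc, dot_Mc, dot_cM, dot0l, dot0r).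
rewrite NN5 NN3 GG5 GG3 /eps; lia.
Qed.
Lemma D54 i0 j0 : Dm AA EE (rshift k (rshift l (rshift p (rshift q (lshift _ i0))))) (rshift k (rshift l (rshift p (lshift _ j0)))) = 0 <-> (GG (rshift k (rshift l (rshift p (rshift q (lshift _ i0))))) = GG (rshift k (rshift l (rshift p (lshift _ j0)))) \/ NN (rshift k (rshift l (rshift p (rshift q (lshift _ i0))))) = NN (rshift k (rshift l (rshift p (lshift _ j0))))).
Proof.
rewrite (Dm_eval (AAR5 i0) (EER5 i0) (AAR4 j0) (EER4 j0)) !dot6 ?(dot_cc, dot_Mc, dot_cM, dot0l, dot0r).
rewrite NN5 NN4 GG5 GG4 /eps; lia.
Qed.
Lemma D55 i0 j0 : Dm AA EE (rshift k (rshift l (rshift p (rshift q (lshift _ i0))))) (rshift k (rshift l (rshift p (rshift q (lshift _ j0))))) = 0 <-> (GG (rshift k (rshift l (rshift p (rshift q (lshift _ i0))))) = GG (rshift k (rshift l (rshift p (rshift q (lshift _ j0))))) \/ NN (rshift k (rshift l (rshift p (rshift q (lshift _ i0))))) = NN (rshift k (rshift l (rshift p (rshift q (lshift _ j0)))))).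
Proof.
rewrite (Dm_eval (AAR5 i0) (EER5 i0) (AAR5 j0) (EER5 j0)) !dot6 ?(dot_cc, dot_Mc, dot_cM, dot0l, dot0r).
rewrite NN5 NN5 GG5 GG5 /eps; lia.
Qed.
Lemma D56 i0 j0 : Dm AA EE (rshift k (rshift l (rshift p (rshift q (lshift _ i0))))) (rshift k (rshift l (rshift p (rshift q (rshift r j0))))) = 0 <-> (GG (rshift k (rshift l (rshift p (rshift q (lshift _ i0))))) = GG (rshift k (rshift l (rshift p (rshift q (rshift r j0))))) \/ NN (rshift k (rshift l (rshift p (rshift q (lshift _ i0))))) = NN (rshift k (rshift l (rshift p (rshift q (rshift r j0)))))).
Proof.
rewrite (Dm_eval (AAR5 i0) (EER5 i0) (AAR6 j0) (EER6 j0)) !dot6 ?(dot_cc, dot_Mc, dot_cM, dot0l, dot0r).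
rewrite NN5 NN6 GG5 GG6 /eps; lia.
Qed.
Lemma D61 i0 j0 : Dm AA EE (rshift k (rshift l (rshift p (rshift q (rshift r i0))))) (lshift _ j0) = 0 <-> (GG (rshift k (rshift l (rshift p (rshift q (rshift r i0))))) = GG (lshift _ j0) \/ NN (rshift k (rshift l (rshift p (rshift q (rshift r i0))))) = NN (lshift _ j0)).
Proof.
rewrite (Dm_eval (AAR6 i0) (EER6 i0) (AAR1 j0) (EER1 j0)) !dot6 ?(dot_cc, dot_Mc, dot_cM, dot0l, dot0r).
rewrite NN6 NN1 GG6 GG1 /eps; lia.
Qed.
Lemma D62 i0 j0 : Dm AA EE (rshift k (rshift l (rshift p (rshift q (rshift r i0))))) (rshift k (lshift _ j0)) = 0 <-> (GG (rshift k (rshift l (rshift p (rshift q (rshift r i0))))) = GG (rshift k (lshift _ j0)) \/ NN (rshift k (rshift l (rshift p (rshift q (rshift r i0))))) = NN (rshift k (lshift _ j0))).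
Proof.
rewrite (Dm_eval (AAR6 i0) (EER6 i0) (AAR2 j0) (EER2 j0)) !dot6 ?(dot_cc, dot_Mc, dot_cM, dot0l, dot0r).
rewrite NN6 NN2 GG6 GG2 /eps; lia.
Qed.
Lemma D63 i0 j0 : Dm AA EE (rshift k (rshift l (rshift p (rshift q (rshift r i0))))) (rshift k (rshift l (lshift _ j0))) = 0 <-> (GG (rshift k (rshift l (rshift p (rshift q (rshift r i0))))) = GG (rshift k (rshift l (lshift _ j0))) \/ NN (rshift k (rshift l (rshift p (rshift q (rshift r i0))))) = NN (rshift k (rshift l (lshift _ j0)))).
Proof.
rewrite (Dm_eval (AAR6 i0) (EER6 i0) (AAR3 j0) (EER3 j0)) !dot6 ?(dot_cc, dot_Mc, dot_cM, dot0l, dot0r).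
rewrite NN6 NN3 GG6 GG3 /eps; lia.
Qed.
Lemma D64 i0 j0 : Dm AA EE (rshift k (rshift l (rshift p (rshift q (rshift r i0))))) (rshift k (rshift l (rshift p (lshift _ j0)))) = 0 <-> (GG (rshift k (rshift l (rshift p (rshift q (rshift r i0))))) = GG (rshift k (rshift l (rshift p (lshift _ j0)))) \/ NN (rshift k (rshift l (rshift p (rshift q (rshift r i0))))) = NN (rshift k (rshift l (rshift p (lshift _ j0))))).
Proof.
rewrite (Dm_eval (AAR6 i0) (EER6 i0) (AAR4 j0) (EER4 j0)) !dot6 ?(dot_cc, dot_Mc, dot_cM, dot0l, dot0r).
rewrite NN6 NN4 GG6 GG4 /eps; lia.
Qed.
Lemma D65 i0 j0 : Dm AA EE (rshift k (rshift l (rshift p (rshift q (rshift r i0))))) (rshift k (rshift l (rshift p (rshift q (lshift _ j0))))) = 0 <-> (GG (rshift k (rshift l (rshift p (rshift q (rshift r i0))))) = GG (rshift k (rshift l (rshift p (rshift q (lshift _ j0))))) \/ NN (rshift k (rshift l (rshift p (rshift q (rshift r i0))))) = NN (rshift k (rshift l (rshift p (rshift q (lshift _ j0)))))).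
Proof.
rewrite (Dm_eval (AAR6 i0) (EER6 i0) (AAR5 j0) (EER5 j0)) !dot6 ?(dot_cc, dot_Mc, dot_cM, dot0l, dot0r).
rewrite NN6 NN5 GG6 GG5 /eps; lia.
Qed.
Lemma D66 i0 j0 : Dm AA EE (rshift k (rshift l (rshift p (rshift q (rshift r i0))))) (rshift k (rshift l (rshift p (rshift q (rshift r j0))))) = 0 <-> (GG (rshift k (rshift l (rshift p (rshift q (rshift r i0))))) = GG (rshift k (rshift l (rshift p (rshift q (rshift r j0))))) \/ NN (rshift k (rshift l (rshift p (rshift q (rshift r i0))))) = NN (rshift k (rshift l (rshift p (rshift q (rshift r j0)))))).
Proof.
rewrite (Dm_eval (AAR6 i0) (EER6 i0) (AAR6 j0) (EER6 j0)) !dot6 ?(dot_cc, dot_Mc, dot_cM, dot0l, dot0r).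
rewrite NN6 NN6 GG6 GG6 /eps; lia.
Qed.


Lemma Dcase i j : Dm AA EE i j = 0 <-> (GG i = GG j \/ NN i = NN j).
Proof.
case: (blk6P i) => i0; case: (blk6P j) => j0.
- exact: D11.
- exact: D12.
- exact: D13.
- exact: D14.
- exact: D15.
- exact: D16.
- exact: D21.
- exact: D22.
- exact: D23.
- exact: D24.
- exact: D25.
- exact: D26.
- exact: D31.
- exact: D32.
- exact: D33.
- exact: D34.
- exact: D35.
- exact: D36.
- exact: D41.
- exact: D42.
- exact: D43.
- exact: D44.
- exact: D45.
- exact: D46.
- exact: D51.
- exact: D52.
- exact: D53.
- exact: D54.
- exact: D55.
- exact: D56.
- exact: D61.
- exact: D62.
- exact: D63.
- exact: D64.
- exact: D65.
- exact: D66.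
Qed.

Lemma GG_range i : GG i = 0 \/ GG i = 1 \/ GG i = 2.
Proof.
case: (blk6P i) => i0;
 rewrite ?(GG1, GG2, GG3, GG4, GG5, GG6); lia.
Qed.

Hypothesis P1 : (0 < k + l)%N.
Hypothesis P2 : (0 < p + q)%N.
Hypothesis P3 : (0 < r + s)%N.

Lemma exG1 : exists i, GG i = 0.
Proof.
case: (posnP k) => [k0|kp]; last by exists (lshift _ (Ordinal kp)); rewrite GG1.
have lp : (0 < l)%N by move: P1; rewrite k0.
by exists (rshift k (lshift _ (Ordinal lp))); rewrite GG2.
Qed.
Lemma exG2 : exists i, GG i = 1.
Proof.
case: (posnP p) => [k0|kp]; last by exists (rshift k (rshift l (lshift _ (Ordinal kp)))); rewrite GG3.
have lp : (0 < q)%N by move: P2; rewrite k0.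
by exists (rshift k (rshift l (rshift p (lshift _ (Ordinal lp))))); rewrite GG4.
Qed.

Lemma row_thm : AA *m AA^T = (AA + EE) *m (AA + EE)^T <->
  exists x1 x2 y1 y2 z1 z2 : int,
   cond1_with (block_mx X11 X12 X21 X22) (block_mx Y11 Y12 Y21 Y22) (block_mx Z11 Z12 Z21 Z22) x1 x2 y1 y2 z1 z2.
Proof.
rewrite gram_Dm; split.
  move=> hD.
  have hc i j : GG i = GG j \/ NN i = NN j by apply/Dcase.
  have [g1 hg1] := exG1; have [g2 hg2] := exG2.
  have h12 : NN g1 = NN g2 by case: (hc g1 g2) => //; rewrite hg1 hg2.
  have hN i : NN i = NN g1.
    case: (GG_range i) => [h0|h].
      by case: (hc i g2) => [|->//]; rewrite h0 hg2.
    by case: (hc i g1) => [|->//]; rewrite hg1; lia.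
  set t := NN g1 in hN.
  exists t, (eps - t), (eps - t), t, (t - eps), (- t).
  rewrite /cond1_with /eps in hN *; split.
  - apply/bv_eq; split=> i0.
      by move: (hN (lshift _ i0)); rewrite NN1.
    by move: (hN (rshift k (lshift _ i0))); rewrite NN2 /eps; lia.
  - apply/bv_eq; split=> i0.
      by move: (hN (rshift k (rshift l (lshift _ i0)))); rewrite NN3 /eps; lia.
    by move: (hN (rshift k (rshift l (rshift p (lshift _ i0))))); rewrite NN4.
  - apply/bv_eq; split=> i0.
      by move: (hN (rshift k (rshift l (rshift p (rshift q (lshift _ i0)))))); rewrite NN5 /eps; lia.
    by move: (hN (rshift k (rshift l (rshift p (rshift q (rshift r i0)))))); rewrite NN6; lia.
  - lia.
  - split; lia.
case=> x1 [x2 [y1 [y2 [z1 [z2]]]]].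
rewrite /cond1_with => -[/bv_eq [hx1 hx2] /bv_eq [hy1 hy2] /bv_eq [hz1 hz2] hr [hs1 hs2 hs3]].
have hN i : NN i = x1.
  case: (blk6P i) => i0;
   rewrite ?(NN1, NN2, NN3, NN4, NN5, NN6) ?hx1 ?hx2 ?hy1 ?hy2 ?hz1 ?hz2 /eps; lia.
by move=> i j; apply/Dcase; right; rewrite !hN.
Qed.
End Main.


Lemma entry_row m n (M : 'M[int]_(m, n)) i j : M i j = (row i M) ord0 j.
Proof. by rewrite mxE. Qed.

Lemma ET k l p q r s a b c d e f :
  (EE k l p q r s a b c d e f)^T = EE a b c d e f k l p q r s.
Proof.
apply/matrixP => i j; rewrite [LHS]mxE [LHS]entry_row [RHS]entry_row.
case: (blk6P i) => i0; case: (blk6P j) => j0.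
- by rewrite [in LHS](@EER1 k l p q r s a b c d e f j0) [in RHS](@EER1 a b c d e f k l p q r s i0) [in LHS]row6E1 [in RHS]row6E1 !mxE.
- by rewrite [in LHS](@EER2 k l p q r s a b c d e f j0) [in RHS](@EER1 a b c d e f k l p q r s i0) [in LHS]row6E1 [in RHS]row6E2 !mxE.
- by rewrite [in LHS](@EER3 k l p q r s a b c d e f j0) [in RHS](@EER1 a b c d e f k l p q r s i0) [in LHS]row6E1 [in RHS]row6E3 !mxE.
- by rewrite [in LHS](@EER4 k l p q r s a b c d e f j0) [in RHS](@EER1 a b c d e f k l p q r s i0) [in LHS]row6E1 [in RHS]row6E4 !mxE.
- by rewrite [in LHS](@EER5 k l p q r s a b c d e f j0) [in RHS](@EER1 a b c d e f k l p q r s i0) [in LHS]row6E1 [in RHS]row6E5 !mxE.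
- by rewrite [in LHS](@EER6 k l p q r s a b c d e f j0) [in RHS](@EER1 a b c d e f k l p q r s i0) [in LHS]row6E1 [in RHS]row6E6 !mxE.
- by rewrite [in LHS](@EER1 k l p q r s a b c d e f j0) [in RHS](@EER2 a b c d e f k l p q r s i0) [in LHS]row6E2 [in RHS]row6E1 !mxE.
- by rewrite [in LHS](@EER2 k l p q r s a b c d e f j0) [in RHS](@EER2 a b c d e f k l p q r s i0) [in LHS]row6E2 [in RHS]row6E2 !mxE.
- by rewrite [in LHS](@EER3 k l p q r s a b c d e f j0) [in RHS](@EER2 a b c d e f k l p q r s i0) [in LHS]row6E2 [in RHS]row6E3 !mxE.
- by rewrite [in LHS](@EER4 k l p q r s a b c d e f j0) [in RHS](@EER2 a b c d e f k l p q r s i0) [in LHS]row6E2 [in RHS]row6E4 !mxE.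
- by rewrite [in LHS](@EER5 k l p q r s a b c d e f j0) [in RHS](@EER2 a b c d e f k l p q r s i0) [in LHS]row6E2 [in RHS]row6E5 !mxE.
- by rewrite [in LHS](@EER6 k l p q r s a b c d e f j0) [in RHS](@EER2 a b c d e f k l p q r s i0) [in LHS]row6E2 [in RHS]row6E6 !mxE.
- by rewrite [in LHS](@EER1 k l p q r s a b c d e f j0) [in RHS](@EER3 a b c d e f k l p q r s i0) [in LHS]row6E3 [in RHS]row6E1 !mxE.
- by rewrite [in LHS](@EER2 k l p q r s a b c d e f j0) [in RHS](@EER3 a b c d e f k l p q r s i0) [in LHS]row6E3 [in RHS]row6E2 !mxE.
- by rewrite [in LHS](@EER3 k l p q r s a b c d e f j0) [in RHS](@EER3 a b c d e f k l p q r s i0) [in LHS]row6E3 [in RHS]row6E3 !mxE.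
- by rewrite [in LHS](@EER4 k l p q r s a b c d e f j0) [in RHS](@EER3 a b c d e f k l p q r s i0) [in LHS]row6E3 [in RHS]row6E4 !mxE.
- by rewrite [in LHS](@EER5 k l p q r s a b c d e f j0) [in RHS](@EER3 a b c d e f k l p q r s i0) [in LHS]row6E3 [in RHS]row6E5 !mxE.
- by rewrite [in LHS](@EER6 k l p q r s a b c d e f j0) [in RHS](@EER3 a b c d e f k l p q r s i0) [in LHS]row6E3 [in RHS]row6E6 !mxE.
- by rewrite [in LHS](@EER1 k l p q r s a b c d e f j0) [in RHS](@EER4 a b c d e f k l p q r s i0) [in LHS]row6E4 [in RHS]row6E1 !mxE.
- by rewrite [in LHS](@EER2 k l p q r s a b c d e f j0) [in RHS](@EER4 a b c d e f k l p q r s i0) [in LHS]row6E4 [in RHS]row6E2 !mxE.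
- by rewrite [in LHS](@EER3 k l p q r s a b c d e f j0) [in RHS](@EER4 a b c d e f k l p q r s i0) [in LHS]row6E4 [in RHS]row6E3 !mxE.
- by rewrite [in LHS](@EER4 k l p q r s a b c d e f j0) [in RHS](@EER4 a b c d e f k l p q r s i0) [in LHS]row6E4 [in RHS]row6E4 !mxE.
- by rewrite [in LHS](@EER5 k l p q r s a b c d e f j0) [in RHS](@EER4 a b c d e f k l p q r s i0) [in LHS]row6E4 [in RHS]row6E5 !mxE.
- by rewrite [in LHS](@EER6 k l p q r s a b c d e f j0) [in RHS](@EER4 a b c d e f k l p q r s i0) [in LHS]row6E4 [in RHS]row6E6 !mxE.
- by rewrite [in LHS](@EER1 k l p q r s a b c d e f j0) [in RHS](@EER5 a b c d e f k l p q r s i0) [in LHS]row6E5 [in RHS]row6E1 !mxE.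
- by rewrite [in LHS](@EER2 k l p q r s a b c d e f j0) [in RHS](@EER5 a b c d e f k l p q r s i0) [in LHS]row6E5 [in RHS]row6E2 !mxE.
- by rewrite [in LHS](@EER3 k l p q r s a b c d e f j0) [in RHS](@EER5 a b c d e f k l p q r s i0) [in LHS]row6E5 [in RHS]row6E3 !mxE.
- by rewrite [in LHS](@EER4 k l p q r s a b c d e f j0) [in RHS](@EER5 a b c d e f k l p q r s i0) [in LHS]row6E5 [in RHS]row6E4 !mxE.
- by rewrite [in LHS](@EER5 k l p q r s a b c d e f j0) [in RHS](@EER5 a b c d e f k l p q r s i0) [in LHS]row6E5 [in RHS]row6E5 !mxE.
- by rewrite [in LHS](@EER6 k l p q r s a b c d e f j0) [in RHS](@EER5 a b c d e f k l p q r s i0) [in LHS]row6E5 [in RHS]row6E6 !mxE.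
- by rewrite [in LHS](@EER1 k l p q r s a b c d e f j0) [in RHS](@EER6 a b c d e f k l p q r s i0) [in LHS]row6E6 [in RHS]row6E1 !mxE.
- by rewrite [in LHS](@EER2 k l p q r s a b c d e f j0) [in RHS](@EER6 a b c d e f k l p q r s i0) [in LHS]row6E6 [in RHS]row6E2 !mxE.
- by rewrite [in LHS](@EER3 k l p q r s a b c d e f j0) [in RHS](@EER6 a b c d e f k l p q r s i0) [in LHS]row6E6 [in RHS]row6E3 !mxE.
- by rewrite [in LHS](@EER4 k l p q r s a b c d e f j0) [in RHS](@EER6 a b c d e f k l p q r s i0) [in LHS]row6E6 [in RHS]row6E4 !mxE.
- by rewrite [in LHS](@EER5 k l p q r s a b c d e f j0) [in RHS](@EER6 a b c d e f k l p q r s i0) [in LHS]row6E6 [in RHS]row6E5 !mxE.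
- by rewrite [in LHS](@EER6 k l p q r s a b c d e f j0) [in RHS](@EER6 a b c d e f k l p q r s i0) [in LHS]row6E6 [in RHS]row6E6 !mxE.
Qed.

Lemma AT k l p q r s a b c d e f (X11 : 'M[int]_(k, e)) (X12 : 'M[int]_(k, f))
  (X21 : 'M[int]_(l, e)) (X22 : 'M[int]_(l, f))
  (Y11 : 'M[int]_(p, c)) (Y12 : 'M[int]_(p, d))
  (Y21 : 'M[int]_(q, c)) (Y22 : 'M[int]_(q, d))
  (Z11 : 'M[int]_(r, a)) (Z12 : 'M[int]_(r, b))
  (Z21 : 'M[int]_(s, a)) (Z22 : 'M[int]_(s, b)) :
  (AA X11 X12 X21 X22 Y11 Y12 Y21 Y22 Z11 Z12 Z21 Z22)^T =
  AA Z11^T Z21^T Z12^T Z22^T Y11^T Y21^T Y12^T Y22^T X11^T X21^T X12^T X22^T.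
Proof.
apply/matrixP => i j; rewrite [LHS]mxE [LHS]entry_row [RHS]entry_row.
case: (blk6P i) => i0; case: (blk6P j) => j0.
- by rewrite [in LHS](AAR1 X11 X12 X21 X22 Y11 Y12 Y21 Y22 Z11 Z12 Z21 Z22 j0) [in RHS](AAR1 Z11^T Z21^T Z12^T Z22^T Y11^T Y21^T Y12^T Y22^T X11^T X21^T X12^T X22^T i0) [in LHS]row6E1 [in RHS]row6E1 !mxE.
- by rewrite [in LHS](AAR2 X11 X12 X21 X22 Y11 Y12 Y21 Y22 Z11 Z12 Z21 Z22 j0) [in RHS](AAR1 Z11^T Z21^T Z12^T Z22^T Y11^T Y21^T Y12^T Y22^T X11^T X21^T X12^T X22^T i0) [in LHS]row6E1 [in RHS]row6E2 !mxE.
- by rewrite [in LHS](AAR3 X11 X12 X21 X22 Y11 Y12 Y21 Y22 Z11 Z12 Z21 Z22 j0) [in RHS](AAR1 Z11^T Z21^T Z12^T Z22^T Y11^T Y21^T Y12^T Y22^T X11^T X21^T X12^T X22^T i0) [in LHS]row6E1 [in RHS]row6E3 !mxE.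
- by rewrite [in LHS](AAR4 X11 X12 X21 X22 Y11 Y12 Y21 Y22 Z11 Z12 Z21 Z22 j0) [in RHS](AAR1 Z11^T Z21^T Z12^T Z22^T Y11^T Y21^T Y12^T Y22^T X11^T X21^T X12^T X22^T i0) [in LHS]row6E1 [in RHS]row6E4 !mxE.
- by rewrite [in LHS](AAR5 X11 X12 X21 X22 Y11 Y12 Y21 Y22 Z11 Z12 Z21 Z22 j0) [in RHS](AAR1 Z11^T Z21^T Z12^T Z22^T Y11^T Y21^T Y12^T Y22^T X11^T X21^T X12^T X22^T i0) [in LHS]row6E1 [in RHS]row6E5 !mxE.
- by rewrite [in LHS](AAR6 X11 X12 X21 X22 Y11 Y12 Y21 Y22 Z11 Z12 Z21 Z22 j0) [in RHS](AAR1 Z11^T Z21^T Z12^T Z22^T Y11^T Y21^T Y12^T Y22^T X11^T X21^T X12^T X22^T i0) [in LHS]row6E1 [in RHS]row6E6 !mxE.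
- by rewrite [in LHS](AAR1 X11 X12 X21 X22 Y11 Y12 Y21 Y22 Z11 Z12 Z21 Z22 j0) [in RHS](AAR2 Z11^T Z21^T Z12^T Z22^T Y11^T Y21^T Y12^T Y22^T X11^T X21^T X12^T X22^T i0) [in LHS]row6E2 [in RHS]row6E1 !mxE.
- by rewrite [in LHS](AAR2 X11 X12 X21 X22 Y11 Y12 Y21 Y22 Z11 Z12 Z21 Z22 j0) [in RHS](AAR2 Z11^T Z21^T Z12^T Z22^T Y11^T Y21^T Y12^T Y22^T X11^T X21^T X12^T X22^T i0) [in LHS]row6E2 [in RHS]row6E2 !mxE.
- by rewrite [in LHS](AAR3 X11 X12 X21 X22 Y11 Y12 Y21 Y22 Z11 Z12 Z21 Z22 j0) [in RHS](AAR2 Z11^T Z21^T Z12^T Z22^T Y11^T Y21^T Y12^T Y22^T X11^T X21^T X12^T X22^T i0) [in LHS]row6E2 [in RHS]row6E3 !mxE.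
- by rewrite [in LHS](AAR4 X11 X12 X21 X22 Y11 Y12 Y21 Y22 Z11 Z12 Z21 Z22 j0) [in RHS](AAR2 Z11^T Z21^T Z12^T Z22^T Y11^T Y21^T Y12^T Y22^T X11^T X21^T X12^T X22^T i0) [in LHS]row6E2 [in RHS]row6E4 !mxE.
- by rewrite [in LHS](AAR5 X11 X12 X21 X22 Y11 Y12 Y21 Y22 Z11 Z12 Z21 Z22 j0) [in RHS](AAR2 Z11^T Z21^T Z12^T Z22^T Y11^T Y21^T Y12^T Y22^T X11^T X21^T X12^T X22^T i0) [in LHS]row6E2 [in RHS]row6E5 !mxE.
- by rewrite [in LHS](AAR6 X11 X12 X21 X22 Y11 Y12 Y21 Y22 Z11 Z12 Z21 Z22 j0) [in RHS](AAR2 Z11^T Z21^T Z12^T Z22^T Y11^T Y21^T Y12^T Y22^T X11^T X21^T X12^T X22^T i0) [in LHS]row6E2 [in RHS]row6E6 !mxE.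
- by rewrite [in LHS](AAR1 X11 X12 X21 X22 Y11 Y12 Y21 Y22 Z11 Z12 Z21 Z22 j0) [in RHS](AAR3 Z11^T Z21^T Z12^T Z22^T Y11^T Y21^T Y12^T Y22^T X11^T X21^T X12^T X22^T i0) [in LHS]row6E3 [in RHS]row6E1 !mxE.
- by rewrite [in LHS](AAR2 X11 X12 X21 X22 Y11 Y12 Y21 Y22 Z11 Z12 Z21 Z22 j0) [in RHS](AAR3 Z11^T Z21^T Z12^T Z22^T Y11^T Y21^T Y12^T Y22^T X11^T X21^T X12^T X22^T i0) [in LHS]row6E3 [in RHS]row6E2 !mxE.
- by rewrite [in LHS](AAR3 X11 X12 X21 X22 Y11 Y12 Y21 Y22 Z11 Z12 Z21 Z22 j0) [in RHS](AAR3 Z11^T Z21^T Z12^T Z22^T Y11^T Y21^T Y12^T Y22^T X11^T X21^T X12^T X22^T i0) [in LHS]row6E3 [in RHS]row6E3 !mxE.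
- by rewrite [in LHS](AAR4 X11 X12 X21 X22 Y11 Y12 Y21 Y22 Z11 Z12 Z21 Z22 j0) [in RHS](AAR3 Z11^T Z21^T Z12^T Z22^T Y11^T Y21^T Y12^T Y22^T X11^T X21^T X12^T X22^T i0) [in LHS]row6E3 [in RHS]row6E4 !mxE.
- by rewrite [in LHS](AAR5 X11 X12 X21 X22 Y11 Y12 Y21 Y22 Z11 Z12 Z21 Z22 j0) [in RHS](AAR3 Z11^T Z21^T Z12^T Z22^T Y11^T Y21^T Y12^T Y22^T X11^T X21^T X12^T X22^T i0) [in LHS]row6E3 [in RHS]row6E5 !mxE.
- by rewrite [in LHS](AAR6 X11 X12 X21 X22 Y11 Y12 Y21 Y22 Z11 Z12 Z21 Z22 j0) [in RHS](AAR3 Z11^T Z21^T Z12^T Z22^T Y11^T Y21^T Y12^T Y22^T X11^T X21^T X12^T X22^T i0) [in LHS]row6E3 [in RHS]row6E6 !mxE.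
- by rewrite [in LHS](AAR1 X11 X12 X21 X22 Y11 Y12 Y21 Y22 Z11 Z12 Z21 Z22 j0) [in RHS](AAR4 Z11^T Z21^T Z12^T Z22^T Y11^T Y21^T Y12^T Y22^T X11^T X21^T X12^T X22^T i0) [in LHS]row6E4 [in RHS]row6E1 !mxE.
- by rewrite [in LHS](AAR2 X11 X12 X21 X22 Y11 Y12 Y21 Y22 Z11 Z12 Z21 Z22 j0) [in RHS](AAR4 Z11^T Z21^T Z12^T Z22^T Y11^T Y21^T Y12^T Y22^T X11^T X21^T X12^T X22^T i0) [in LHS]row6E4 [in RHS]row6E2 !mxE.
- by rewrite [in LHS](AAR3 X11 X12 X21 X22 Y11 Y12 Y21 Y22 Z11 Z12 Z21 Z22 j0) [in RHS](AAR4 Z11^T Z21^T Z12^T Z22^T Y11^T Y21^T Y12^T Y22^T X11^T X21^T X12^T X22^T i0) [in LHS]row6E4 [in RHS]row6E3 !mxE.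
- by rewrite [in LHS](AAR4 X11 X12 X21 X22 Y11 Y12 Y21 Y22 Z11 Z12 Z21 Z22 j0) [in RHS](AAR4 Z11^T Z21^T Z12^T Z22^T Y11^T Y21^T Y12^T Y22^T X11^T X21^T X12^T X22^T i0) [in LHS]row6E4 [in RHS]row6E4 !mxE.
- by rewrite [in LHS](AAR5 X11 X12 X21 X22 Y11 Y12 Y21 Y22 Z11 Z12 Z21 Z22 j0) [in RHS](AAR4 Z11^T Z21^T Z12^T Z22^T Y11^T Y21^T Y12^T Y22^T X11^T X21^T X12^T X22^T i0) [in LHS]row6E4 [in RHS]row6E5 !mxE.
- by rewrite [in LHS](AAR6 X11 X12 X21 X22 Y11 Y12 Y21 Y22 Z11 Z12 Z21 Z22 j0) [in RHS](AAR4 Z11^T Z21^T Z12^T Z22^T Y11^T Y21^T Y12^T Y22^T X11^T X21^T X12^T X22^T i0) [in LHS]row6E4 [in RHS]row6E6 !mxE.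
- by rewrite [in LHS](AAR1 X11 X12 X21 X22 Y11 Y12 Y21 Y22 Z11 Z12 Z21 Z22 j0) [in RHS](AAR5 Z11^T Z21^T Z12^T Z22^T Y11^T Y21^T Y12^T Y22^T X11^T X21^T X12^T X22^T i0) [in LHS]row6E5 [in RHS]row6E1 !mxE.
- by rewrite [in LHS](AAR2 X11 X12 X21 X22 Y11 Y12 Y21 Y22 Z11 Z12 Z21 Z22 j0) [in RHS](AAR5 Z11^T Z21^T Z12^T Z22^T Y11^T Y21^T Y12^T Y22^T X11^T X21^T X12^T X22^T i0) [in LHS]row6E5 [in RHS]row6E2 !mxE.
- by rewrite [in LHS](AAR3 X11 X12 X21 X22 Y11 Y12 Y21 Y22 Z11 Z12 Z21 Z22 j0) [in RHS](AAR5 Z11^T Z21^T Z12^T Z22^T Y11^T Y21^T Y12^T Y22^T X11^T X21^T X12^T X22^T i0) [in LHS]row6E5 [in RHS]row6E3 !mxE.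
- by rewrite [in LHS](AAR4 X11 X12 X21 X22 Y11 Y12 Y21 Y22 Z11 Z12 Z21 Z22 j0) [in RHS](AAR5 Z11^T Z21^T Z12^T Z22^T Y11^T Y21^T Y12^T Y22^T X11^T X21^T X12^T X22^T i0) [in LHS]row6E5 [in RHS]row6E4 !mxE.
- by rewrite [in LHS](AAR5 X11 X12 X21 X22 Y11 Y12 Y21 Y22 Z11 Z12 Z21 Z22 j0) [in RHS](AAR5 Z11^T Z21^T Z12^T Z22^T Y11^T Y21^T Y12^T Y22^T X11^T X21^T X12^T X22^T i0) [in LHS]row6E5 [in RHS]row6E5 !mxE.
- by rewrite [in LHS](AAR6 X11 X12 X21 X22 Y11 Y12 Y21 Y22 Z11 Z12 Z21 Z22 j0) [in RHS](AAR5 Z11^T Z21^T Z12^T Z22^T Y11^T Y21^T Y12^T Y22^T X11^T X21^T X12^T X22^T i0) [in LHS]row6E5 [in RHS]row6E6 !mxE.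
- by rewrite [in LHS](AAR1 X11 X12 X21 X22 Y11 Y12 Y21 Y22 Z11 Z12 Z21 Z22 j0) [in RHS](AAR6 Z11^T Z21^T Z12^T Z22^T Y11^T Y21^T Y12^T Y22^T X11^T X21^T X12^T X22^T i0) [in LHS]row6E6 [in RHS]row6E1 !mxE.
- by rewrite [in LHS](AAR2 X11 X12 X21 X22 Y11 Y12 Y21 Y22 Z11 Z12 Z21 Z22 j0) [in RHS](AAR6 Z11^T Z21^T Z12^T Z22^T Y11^T Y21^T Y12^T Y22^T X11^T X21^T X12^T X22^T i0) [in LHS]row6E6 [in RHS]row6E2 !mxE.
- by rewrite [in LHS](AAR3 X11 X12 X21 X22 Y11 Y12 Y21 Y22 Z11 Z12 Z21 Z22 j0) [in RHS](AAR6 Z11^T Z21^T Z12^T Z22^T Y11^T Y21^T Y12^T Y22^T X11^T X21^T X12^T X22^T i0) [in LHS]row6E6 [in RHS]row6E3 !mxE.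
- by rewrite [in LHS](AAR4 X11 X12 X21 X22 Y11 Y12 Y21 Y22 Z11 Z12 Z21 Z22 j0) [in RHS](AAR6 Z11^T Z21^T Z12^T Z22^T Y11^T Y21^T Y12^T Y22^T X11^T X21^T X12^T X22^T i0) [in LHS]row6E6 [in RHS]row6E4 !mxE.
- by rewrite [in LHS](AAR5 X11 X12 X21 X22 Y11 Y12 Y21 Y22 Z11 Z12 Z21 Z22 j0) [in RHS](AAR6 Z11^T Z21^T Z12^T Z22^T Y11^T Y21^T Y12^T Y22^T X11^T X21^T X12^T X22^T i0) [in LHS]row6E6 [in RHS]row6E5 !mxE.
- by rewrite [in LHS](AAR6 X11 X12 X21 X22 Y11 Y12 Y21 Y22 Z11 Z12 Z21 Z22 j0) [in RHS](AAR6 Z11^T Z21^T Z12^T Z22^T Y11^T Y21^T Y12^T Y22^T X11^T X21^T X12^T X22^T i0) [in LHS]row6E6 [in RHS]row6E6 !mxE.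
Qed.




Lemma const_row6 m n1 n2 n3 n4 n5 n6 (x : int) :
  (const_mx x : 'M_(m, n1 + (n2 + (n3 + (n4 + (n5 + n6)))))) =
  row6 (const_mx x) (const_mx x) (const_mx x) (const_mx x) (const_mx x) (const_mx x).
Proof.
apply/matrixP=> i j; rewrite [LHS]mxE.
by case: (blk6P j) => j0; rewrite ?(row6E1, row6E2, row6E3, row6E4, row6E5, row6E6) mxE.
Qed.

Lemma rsum_dot m n (M : 'M[int]_(m, n)) i : rsum M i = dot (row i M) (const_mx 1).
Proof. by rewrite dot_Mc mulr1. Qed.

Lemma trmxD'  m n (A B : 'M[int]_(m, n)) : (A + B)^T = A^T + B^T.
Proof. by apply/matrixP=> i j; rewrite !mxE. Qed.

Lemma cc1 n (x y : int) i j :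
  ((const_mx x : 'M_(1, n)) *m (const_mx y : 'M_(n, 1))) i j = x * y *+ n.
Proof.
rewrite mxE (eq_bigr (fun _ => x * y)) ?sumr_const ?card_ord // => t _.
by rewrite !mxE.
Qed.

Lemma PL m1 m2 n1 n2 (M : 'M[int]_(m1 + m2, n1 + n2)) x1 x2 a1 a2 :
  M *m col_mx (ones n1) (- ones n2) = col_mx (cst m1 x1) (cst m2 x2) ->
  M^T *m col_mx (ones m1) (- ones m2) = col_mx (cst n1 a1) (cst n2 a2) ->
  n1%:Z * a1 - n2%:Z * a2 = m1%:Z * x1 - m2%:Z * x2.
Proof.
move=> h1 h2.
have key : (col_mx (ones m1) (- ones m2))^T *m (M *m col_mx (ones n1) (- ones n2))
  = (M^T *m col_mx (ones m1) (- ones m2))^T *m col_mx (ones n1) (- ones n2).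
  by rewrite trmx_mul trmxK mulmxA.
rewrite h1 h2 in key.
have := congr1 (fun N : 'M[int]_(1, 1) => N ord0 ord0) key.
rewrite /ones /cst !oppc !tr_col_mx !trmx_const !mul_row_col !addmxE' !cc1.
lia.
Qed.

Section Fin.
Variables (k l p q r s a b c d e f : nat).

Lemma Esz1 : EE k l p q r s a b c d e f *m ones _ = 0 -> (0 < k + l)%N ->
  a%:Z - b%:Z + c%:Z - d%:Z = 0.
Proof.
move=> H P; have h i : rsum (EE k l p q r s a b c d e f) i = 0 by rewrite /rsum H mxE.
case: (posnP k) => [k0|kp].
  have lp : (0 < l)%N by move: P; rewrite k0.
  have := h (rshift k (lshift _ (Ordinal lp))).
  rewrite rsum_dot const_row6 EER2 dot6 ?(dot_cc, dot0l); lia.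
have := h (lshift _ (Ordinal kp)).
rewrite rsum_dot const_row6 EER1 dot6 ?(dot_cc, dot0l); lia.
Qed.
Lemma Esz2 : EE k l p q r s a b c d e f *m ones _ = 0 -> (0 < p + q)%N ->
  a%:Z - b%:Z + e%:Z - f%:Z = 0.
Proof.
move=> H P; have h i : rsum (EE k l p q r s a b c d e f) i = 0 by rewrite /rsum H mxE.
case: (posnP p) => [k0|kp].
  have lp : (0 < q)%N by move: P; rewrite k0.
  have := h (rshift k (rshift l (rshift p (lshift _ (Ordinal lp))))).
  rewrite rsum_dot const_row6 EER4 dot6 ?(dot_cc, dot0l); lia.
have := h (rshift k (rshift l (lshift _ (Ordinal kp)))).
rewrite rsum_dot const_row6 EER3 dot6 ?(dot_cc, dot0l); lia.
Qed.
Lemma Esz3 : EE k l p q r s a b c d e f *m ones _ = 0 -> (0 < r + s)%N ->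
  c%:Z - d%:Z - e%:Z + f%:Z = 0.
Proof.
move=> H P; have h i : rsum (EE k l p q r s a b c d e f) i = 0 by rewrite /rsum H mxE.
case: (posnP r) => [k0|kp].
  have lp : (0 < s)%N by move: P; rewrite k0.
  have := h (rshift k (rshift l (rshift p (rshift q (rshift r (Ordinal lp)))))).
  rewrite rsum_dot const_row6 EER6 dot6 ?(dot_cc, dot0l); lia.
have := h (rshift k (rshift l (rshift p (rshift q (lshift _ (Ordinal kp)))))).
rewrite rsum_dot const_row6 EER5 dot6 ?(dot_cc, dot0l); lia.
Qed.

Lemma EEnz : (0 < k + l)%N -> (0 < a + b)%N -> EE k l p q r s a b c d e f <> 0.
Proof.
move=> P1 P2 h.
have h0 i j : (row i (EE k l p q r s a b c d e f)) ord0 j = 0 by rewrite -entry_row h mxE.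
have [i [u [hu hi]]] : exists i u, (u = 1 \/ u = -1) /\
   row i (EE k l p q r s a b c d e f) = row6 (const_mx u) (const_mx (- u)) (const_mx u) (const_mx (- u)) 0 0.
  case: (posnP k) => [k0|kp].
    have lp : (0 < l)%N by move: P1; rewrite k0.
    by exists (rshift k (lshift _ (Ordinal lp))), (-1); rewrite EER2 opprK; split; [right|].
  by exists (lshift _ (Ordinal kp)), 1; rewrite EER1; split; [left|].
have := h0 i; rewrite hi => {}h0.
case: (posnP a) => [a0|ap].
  have bp : (0 < b)%N by move: P2; rewrite a0.
  have := h0 (rshift a (lshift _ (Ordinal bp))); rewrite row6E2 mxE; lia.
have := h0 (lshift _ (Ordinal ap)); rewrite row6E1 mxE; lia.
Qed.
End Fin.

Lemma sum01_gen m n (A E : 'M[int]_(m, n)) i uA uE :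
  row i A = uA -> row i E = uE ->
  (forall j, uA ord0 j = 0 \/ uA ord0 j = 1 -> uA ord0 j + uE ord0 j = 0 \/ uA ord0 j + uE ord0 j = 1) ->
  forall j, A i j = 0 \/ A i j = 1 -> (A + E) i j = 0 \/ (A + E) i j = 1.
Proof. by move=> <- <- h j; move: (h j); rewrite !mxE. Qed.

Section Fin2.
Variables (k l p q r s a b c d e f : nat).
Variables (X11 : 'M[int]_(k, e)) (X12 : 'M[int]_(k, f))
  (X21 : 'M[int]_(l, e)) (X22 : 'M[int]_(l, f))
  (Y11 : 'M[int]_(p, c)) (Y12 : 'M[int]_(p, d))
  (Y21 : 'M[int]_(q, c)) (Y22 : 'M[int]_(q, d))
  (Z11 : 'M[int]_(r, a)) (Z12 : 'M[int]_(r, b))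
  (Z21 : 'M[int]_(s, a)) (Z22 : 'M[int]_(s, b)).

Lemma sum01 : is01 (AA X11 X12 X21 X22 Y11 Y12 Y21 Y22 Z11 Z12 Z21 Z22) -> is01 (AA X11 X12 X21 X22 Y11 Y12 Y21 Y22 Z11 Z12 Z21 Z22 + EE k l p q r s a b c d e f).
Proof.
move=> h i j.
case: (blk6P i) => i0.
- apply: (sum01_gen (AAR1 X11 X12 X21 X22 Y11 Y12 Y21 Y22 Z11 Z12 Z21 Z22 i0) (@EER1 k l p q r s a b c d e f i0) _ (h _ j)) => j1.
  case: (blk6P j1) => j0; rewrite ?(row6E1, row6E2, row6E3, row6E4, row6E5, row6E6) ?mxE; lia.
- apply: (sum01_gen (AAR2 X11 X12 X21 X22 Y11 Y12 Y21 Y22 Z11 Z12 Z21 Z22 i0) (@EER2 k l p q r s a b c d e f i0) _ (h _ j)) => j1.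
  case: (blk6P j1) => j0; rewrite ?(row6E1, row6E2, row6E3, row6E4, row6E5, row6E6) ?mxE; lia.
- apply: (sum01_gen (AAR3 X11 X12 X21 X22 Y11 Y12 Y21 Y22 Z11 Z12 Z21 Z22 i0) (@EER3 k l p q r s a b c d e f i0) _ (h _ j)) => j1.
  case: (blk6P j1) => j0; rewrite ?(row6E1, row6E2, row6E3, row6E4, row6E5, row6E6) ?mxE; lia.
- apply: (sum01_gen (AAR4 X11 X12 X21 X22 Y11 Y12 Y21 Y22 Z11 Z12 Z21 Z22 i0) (@EER4 k l p q r s a b c d e f i0) _ (h _ j)) => j1.
  case: (blk6P j1) => j0; rewrite ?(row6E1, row6E2, row6E3, row6E4, row6E5, row6E6) ?mxE; lia.
- apply: (sum01_gen (AAR5 X11 X12 X21 X22 Y11 Y12 Y21 Y22 Z11 Z12 Z21 Z22 i0) (@EER5 k l p q r s a b c d e f i0) _ (h _ j)) => j1.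
  case: (blk6P j1) => j0; rewrite ?(row6E1, row6E2, row6E3, row6E4, row6E5, row6E6) ?mxE; lia.
- apply: (sum01_gen (AAR6 X11 X12 X21 X22 Y11 Y12 Y21 Y22 Z11 Z12 Z21 Z22 i0) (@EER6 k l p q r s a b c d e f i0) _ (h _ j)) => j1.
  case: (blk6P j1) => j0; rewrite ?(row6E1, row6E2, row6E3, row6E4, row6E5, row6E6) ?mxE; lia.
Qed.
End Fin2.

Lemma c12 k l p q r s a b c d e f (X11 : 'M[int]_(k, e)) (X12 : 'M[int]_(k, f))
  (X21 : 'M[int]_(l, e)) (X22 : 'M[int]_(l, f))
  (Y11 : 'M[int]_(p, c)) (Y12 : 'M[int]_(p, d))
  (Y21 : 'M[int]_(q, c)) (Y22 : 'M[int]_(q, d))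
  (Z11 : 'M[int]_(r, a)) (Z12 : 'M[int]_(r, b))
  (Z21 : 'M[int]_(s, a)) (Z22 : 'M[int]_(s, b)) :
  k%:Z - l%:Z + r%:Z - s%:Z = 0 ->
  (exists x1 x2 y1 y2 z1 z2 : int,
   cond1_with (block_mx Z11^T Z21^T Z12^T Z22^T) (block_mx Y11^T Y21^T Y12^T Y22^T)
     (block_mx X11^T X21^T X12^T X22^T) x1 x2 y1 y2 z1 z2) <->
  (exists al1 al2 be1 be2 ga1 ga2 : int,
   cond2_with (block_mx X11 X12 X21 X22) (block_mx Y11 Y12 Y21 Y22)
     (block_mx Z11 Z12 Z21 Z22) al1 al2 be1 be2 ga1 ga2).
Proof.
move=> K; rewrite /cond1_with /cond2_with !tr_block_mx; split.
  case=> x1 [x2 [y1 [y2 [z1 [z2 [h1 h2 h3 h4 [h5 h6 h7]]]]]]].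
  exists z1, z2, y1, y2, x1, x2; split=> //; try lia.
  by split; lia.
case=> x1 [x2 [y1 [y2 [z1 [z2 [h1 h2 h3 h4 [h5 h6 h7]]]]]]].
exists z1, z2, y1, y2, x1, x2; split=> //; try lia.
by split; lia.
Qed.

Theorem theorem4p22 (k l p q r s a b c d e f : nat)
  (X11 : 'M[int]_(k, e)) (X12 : 'M[int]_(k, f))
  (X21 : 'M[int]_(l, e)) (X22 : 'M[int]_(l, f))
  (Y11 : 'M[int]_(p, c)) (Y12 : 'M[int]_(p, d))
  (Y21 : 'M[int]_(q, c)) (Y22 : 'M[int]_(q, d))
  (Z11 : 'M[int]_(r, a)) (Z12 : 'M[int]_(r, b))
  (Z21 : 'M[int]_(s, a)) (Z22 : 'M[int]_(s, b)) :
  let E := Emx k l p q r s a b c d e f in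
  let A := Amx X11 X12 X21 X22 Y11 Y12 Y21 Y22 Z11 Z12 Z21 Z22 in
  let X := block_mx X11 X12 X21 X22 in
  let Y := block_mx Y11 Y12 Y21 Y22 in
  let Z := block_mx Z11 Z12 Z21 Z22 in
  E *m ones _ = 0 ->
  (ones _)^T *m E = 0 ->
  (0 < a + b)%N -> (0 < c + d)%N -> (0 < e + f)%N ->
  (0 < k + l)%N -> (0 < p + q)%N -> (0 < r + s)%N ->
  is01 A ->
  (gram_mates A (A + E) <->
     (exists x1 x2 y1 y2 z1 z2 : int,
        cond1_with X Y Z x1 x2 y1 y2 z1 z2) /\
     (exists al1 al2 be1 be2 ga1 ga2 : int,
        cond2_with X Y Z al1 al2 be1 be2 ga1 ga2))
  /\
  (forall x1 x2 y1 y2 z1 z2 al1 al2 be1 be2 ga1 ga2 : int,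
     cond1_with X Y Z x1 x2 y1 y2 z1 z2 ->
     cond2_with X Y Z al1 al2 be1 be2 ga1 ga2 ->
     [/\ e%:Z * al1 - f%:Z * al2 = k%:Z * x1 - l%:Z * x2,
         c%:Z * be1 - d%:Z * be2 = p%:Z * y1 - q%:Z * y2
       & a%:Z * ga1 - b%:Z * ga2 = r%:Z * z1 - s%:Z * z2]).
Proof.
move=> E A X Y Z HE1 HE2 hab hcd hef hkl hpq hrs HA.
have H1 := Esz1 HE1 hkl; have H2 := Esz2 HE1 hpq; have H3 := Esz3 HE1 hrs.
have HE2' : EE a b c d e f k l p q r s *m ones _ = 0.
  rewrite -ET -[ones _]trmxK -trmx_mul.
  by rewrite [_ *m EE _ _ _ _ _ _ _ _ _ _ _ _]HE2 trmx0.
have K1 := Esz1 HE2' hab; have K2 := Esz2 HE2' hcd; have K3 := Esz3 HE2' hef.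
have RT := row_thm X11 X12 X21 X22 Y11 Y12 Y21 Y22 Z11 Z12 Z21 Z22 H1 H2 H3 hkl hpq hrs.
have CT := row_thm Z11^T Z21^T Z12^T Z22^T Y11^T Y21^T Y12^T Y22^T X11^T X21^T X12^T X22^T
   K1 K2 K3 hab hcd hef.
rewrite -AT -ET trmxK -trmxD' trmxK in CT.
have C12 := c12 X11 X12 X21 X22 Y11 Y12 Y21 Y22 Z11 Z12 Z21 Z22 K2.
split.
  split.
    case=> _ _ _ hr hc; split; first exact: RT.1 hr.
    by apply/C12; apply: CT.1.
  case=> h1 h2; split.
  - exact: HA.
  - exact: sum01.
  - move=> hAE; apply: (EEnz (p:=p) (q:=q) (r:=r) (s:=s) (c:=c) (d:=d) (e:=e) (f:=f) hkl hab).
    by apply: (addrI (AA X11 X12 X21 X22 Y11 Y12 Y21 Y22 Z11 Z12 Z21 Z22)); rewrite addr0; symmetry; exact: hAE.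
  - exact: RT.2 h1.
  - by apply: CT.2; apply/C12.
move=> x1 x2 y1 y2 z1 z2 al1 al2 be1 be2 ga1 ga2 [hx hy hz _ _] [hx' hy' hz' _ _].
split; [exact: PL hx hx' | exact: PL hy hy' | exact: PL hz hz'].
Qed.
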